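(* Let $m\ge 2$ and let $T$ be any hierarchy of size $m$. Let $H(x)=\sum_{n\ge1}H_nx^n$, where $H_n$ is the number of isomorphism classes of hierarchies of size $n$, and let $H^{(m)}(x)=\sum_{n\ge1}H^{(m)}_nx^n$, where $H^{(m)}_n$ is the number of isomorphism classes of hierarchies of size $n$ that do not contain a subhierarchy isomorphic to $T$. Then the radius of convergence of $H^{(m)}(x)$ is strictly larger than the radius of convergence of $H(x)$.
   Context: A hierarchy is a finite rooted unordered tree in which no vertex has exactly one child; its size is its number of leaves. For a vertex $v$ of a hierarchy, the subhierarchy at $v$ is the hierarchy induced by $v$ and all its descendants (with root $v$); a hierarchy contains $T$ as a subhierarchy if the subhierarchy at some vertex (possibly the root) is isomorphic to $T$ as a rooted tree. *)

(* Defs.v *)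
From Stdlib Require Import List Permutation Arith Reals ClassicalEpsilon.
From Coquelicot Require Import Coquelicot.
Import ListNotations.

(* Finite rooted (unordered) trees: a vertex is given by the list of its children;
   the order of the list is irrelevant up to the isomorphism [iso] below. *)
Inductive tree : Type := Node : list tree -> tree.

Inductive iso : tree -> tree -> Prop :=
| iso_node : forall (l l1 l' : list tree),
    Permutation l l1 -> List.Forall2 iso l1 l' -> iso (Node l) (Node l').

(* Number of leaves (the size). *)
Fixpoint leaves (t : tree) : nat :=
  match t with
  | Node l =>
      match l with
      | [] => 1%nat
      | _ => list_sum (map leaves l)
      end
  end.

Fixpoint hierarchy (t : tree) : Prop :=
  match t with
  | Node l =>
      (length l <> 1)%nat /\
      (fix all_h (l : list tree) : Prop :=
         match l with
         | [] => True
         | c :: r => hierarchy c /\ all_h r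
         end) l
  end.

Fixpoint subtrees (t : tree) : list tree :=
  match t with
  | Node l => t :: flat_map subtrees l
  end.

Definition contains (t T : tree) : Prop :=
  exists u, In u (subtrees t) /\ iso u T.

Definition classes_count (P : tree -> Prop) (k : nat) : Prop :=
  exists s : list tree,
    length s = k /\
    List.Forall P s /\
    (forall i j, (i < length s)%nat -> (j < length s)%nat -> i <> j ->
       ~ iso (nth i s (Node [])) (nth j s (Node []))) /\
    (forall t, P t -> exists u, In u s /\ iso t u).

Definition num_classes (P : tree -> Prop) : nat :=
  epsilon (inhabits 0%nat) (fun k => classes_count P k).

Definition hier_gf (Q : tree -> Prop) (n : nat) : R :=
  match n with
  | O => 0%R
  | S _ => INR (num_classes (fun t => hierarchy t /\ leaves t = n /\ Q t))
  end.

(* Main.v *)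
Require Import Defs.
From Stdlib Require Import List Permutation Arith Reals ClassicalEpsilon Lia Lra Classical.
Import ListNotations.

Fixpoint tsize (t : tree) : nat :=
  match t with Node l => S (list_sum (map tsize l)) end.

Lemma list_sum_in_le (f : tree -> nat) l a : In a l -> f a <= list_sum (map f l).
Proof. induction l; simpl; intros H; [contradiction|]. destruct H; subst; try lia. specialize (IHl H); lia. Qed.

Lemma tree_sind (P : tree -> Prop) :
  (forall l, (forall a, In a l -> P a) -> P (Node l)) -> forall t, P t.
Proof.
  intros IH. assert (forall n t, tsize t < n -> P t) as G.
  { induction n; intros [l] Hs; [lia|]. apply IH. intros a Ha.
    apply IHn. pose proof (list_sum_in_le tsize l a Ha). simpl in Hs. lia. }
  intros t; apply (G (S (tsize t))); lia.
Qed.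

Lemma iso_inv l l' : iso (Node l) (Node l') -> exists l1, Permutation l l1 /\ Forall2 iso l1 l'.
Proof. intros Hi; inversion Hi; eauto. Qed.

Lemma Forall2_impl_in {A B} (R R' : A -> B -> Prop) l1 l2 :
  Forall2 R l1 l2 -> (forall a b, In a l1 -> R a b -> R' a b) -> Forall2 R' l1 l2.
Proof. induction 1 as [|x y l l' Hxy Hr IHr]; intros Hi; constructor; auto. apply Hi; simpl; auto.
  apply IHr; intros; apply Hi; simpl; auto. Qed.

Lemma Forall2_flip' {A B} (R : A -> B -> Prop) l1 l2 :
  Forall2 R l1 l2 -> Forall2 (fun b a => R a b) l2 l1.
Proof. induction 1; constructor; auto. Qed.

Lemma Forall2_comp {A B C} (R : A -> B -> Prop) (S : B -> C -> Prop) (U : A -> C -> Prop) l1 l2 l3 :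
  Forall2 R l1 l2 -> Forall2 S l2 l3 -> (forall a b c, In a l1 -> R a b -> S b c -> U a c) -> Forall2 U l1 l3.
Proof. intros H; revert l3; induction H; intros l3 H2 HU; inversion H2; subst; constructor.
  - eapply HU; eauto; simpl; auto.
  - apply IHForall2; auto. intros; eapply HU; eauto; simpl; auto. Qed.

Lemma Forall2_in_l {A B} (R : A -> B -> Prop) l1 l2 a :
  Forall2 R l1 l2 -> In a l1 -> exists b, In b l2 /\ R a b.
Proof. induction 1; simpl; intros Hi; [contradiction|]. destruct Hi; subst; eauto.
  destruct (IHForall2 H1) as [b [? ?]]; eauto. Qed.

Lemma Forall2_in_r {A B} (R : A -> B -> Prop) l1 l2 b :
  Forall2 R l1 l2 -> In b l2 -> exists a, In a l1 /\ R a b.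
Proof. induction 1; simpl; intros Hi; [contradiction|]. destruct Hi; subst; eauto.
  destruct (IHForall2 H1) as [c [? ?]]; eauto. Qed.

Lemma Forall2_length' {A B} (R : A -> B -> Prop) l1 l2 : Forall2 R l1 l2 -> length l1 = length l2.
Proof. induction 1; simpl; auto. Qed.

Lemma iso_refl t : iso t t.
Proof. induction t using tree_sind. econstructor; [apply Permutation_refl|].
  induction l; constructor; [apply H; simpl; auto|]. apply IHl; intros; apply H; simpl; auto. Qed.

Lemma iso_sym t t' : iso t t' -> iso t' t.
Proof.
  revert t'; induction t as [l IH] using tree_sind; intros [l'] H.
  destruct (iso_inv _ _ H) as [l1 [Hp Hf]].
  assert (Forall2 (fun a b => iso b a) l1 l') as Hf'.
  { eapply Forall2_impl_in; [exact Hf|]. intros a b Ha Hab. apply IH; auto.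
    eapply Permutation_in; [apply Permutation_sym; exact Hp|exact Ha]. }
  destruct (Permutation_Forall2 (Permutation_sym Hp) Hf') as [l2 [Hp2 Hf2]].
  econstructor; [exact Hp2|]. apply Forall2_flip' in Hf2. exact Hf2.
Qed.

Lemma iso_trans t t' t'' : iso t t' -> iso t' t'' -> iso t t''.
Proof.
  revert t' t''; induction t as [l IH] using tree_sind; intros [l'] [l''] H1 H2.
  destruct (iso_inv _ _ H1) as [l1 [Hp1 Hf1]].
  destruct (iso_inv _ _ H2) as [l2 [Hp2 Hf2]].
  apply Forall2_flip' in Hf1.
  destruct (Permutation_Forall2 Hp2 Hf1) as [l3 [Hp3 Hf3]].
  apply Forall2_flip' in Hf3.
  econstructor; [eapply perm_trans; [exact Hp1|exact Hp3]|].
  eapply Forall2_comp; [exact Hf3|exact Hf2|]. intros a b c Ha Hab Hbc.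
  eapply IH; eauto. eapply Permutation_in; [apply Permutation_sym|exact Ha].
  eapply perm_trans; eauto.
Qed.

Lemma leaves_node l : leaves (Node l) = match l with [] => 1 | _ => list_sum (map leaves l) end.
Proof. reflexivity. Qed.

Lemma leaves_pos t : 1 <= leaves t.
Proof. induction t as [l IH] using tree_sind. rewrite leaves_node. destruct l as [|a l]; auto.
  pose proof (list_sum_in_le leaves (a::l) a (or_introl eq_refl)). pose proof (IH a (or_introl eq_refl)). lia. Qed.

Lemma Forall2_map_eq {A B} (f : A -> nat) (g : B -> nat) R l1 l2 :
  Forall2 R l1 l2 -> (forall a b, In a l1 -> R a b -> f a = g b) -> map f l1 = map g l2.
Proof. induction 1; simpl; intros H'; auto. f_equal; [apply H'; simpl; auto|]. apply IHForall2; intros; apply H'; simpl; auto. Qed.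

Lemma leaves_iso t t' : iso t t' -> leaves t = leaves t'.
Proof.
  revert t'; induction t as [l IH] using tree_sind; intros [l'] H.
  destruct (iso_inv _ _ H) as [l1 [Hp Hf]].
  assert (map leaves l1 = map leaves l') as E.
  { eapply Forall2_map_eq; [exact Hf|]. intros a b Ha Hab. apply IH; auto.
    eapply Permutation_in; [apply Permutation_sym; exact Hp|exact Ha]. }
  rewrite !leaves_node.
  assert (list_sum (map leaves l) = list_sum (map leaves l')) as E2.
  { rewrite <- E. apply Permutation_list_sum. apply Permutation_map; auto. }
  pose proof (Forall2_length' _ _ _ Hf) as L1. pose proof (Permutation_length Hp) as L2.
  destruct l; destruct l'; simpl in *; auto; lia.
Qed.

Lemma hier_node l : hierarchy (Node l) <-> (length l <> 1)%nat /\ Forall hierarchy l.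
Proof.
  simpl. split; intros [H1 H2]; split; auto; clear H1.
  - induction l; constructor; destruct H2; auto.
  - induction l; auto. inversion H2; subst. split; auto. apply IHl; auto.
Qed.


Lemma hier_iso t t' : iso t t' -> hierarchy t -> hierarchy t'.
Proof.
  revert t'; induction t as [l IH] using tree_sind; intros [l'] H Hh.
  destruct (iso_inv _ _ H) as [l1 [Hp Hf]].
  apply hier_node in Hh as [Hl Hall]. apply hier_node. split.
  - rewrite <- (Forall2_length' _ _ _ Hf), <- (Permutation_length Hp); auto.
  - apply Forall_forall; intros b Hb. destruct (Forall2_in_r _ _ _ _ Hf Hb) as [a [Ha Hab]].
    assert (In a l) by (eapply Permutation_in; [apply Permutation_sym; exact Hp|exact Ha]).
    eapply IH; eauto. rewrite Forall_forall in Hall; auto.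
Qed.

Lemma contains_node l T : contains (Node l) T <-> iso (Node l) T \/ exists a, In a l /\ contains a T.
Proof.
  unfold contains; simpl. split.
  - intros [u [[E|Hu] Hi]]; [subst; auto|]. right. apply in_flat_map in Hu as [a [Ha Hu]]. eauto.
  - intros [H|[a [Ha [u [Hu Hi]]]]]; [eauto|]. exists u; split; auto. right. apply in_flat_map; eauto.
Qed.

Lemma contains_iso t t' T : iso t t' -> contains t T -> contains t' T.
Proof.
  revert t'; induction t as [l IH] using tree_sind; intros [l'] H Hc.
  destruct (iso_inv _ _ H) as [l1 [Hp Hf]].
  apply contains_node in Hc as [Hc|[a [Ha Hc]]]; apply contains_node.
  - left. eapply iso_trans; [apply iso_sym; exact H|exact Hc].
  - right. assert (In a l1) as Ha1 by (eapply Permutation_in; eauto).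
    destruct (Forall2_in_l _ _ _ _ Hf Ha1) as [b [Hb Hab]]. exists b; split; auto. eapply IH; eauto.
Qed.

Lemma contains_self t : contains t t.
Proof. destruct t as [l]. apply contains_node. left; apply iso_refl. Qed.

Lemma leaves_child a l : In a l -> leaves a <= leaves (Node l).
Proof. intros H. rewrite leaves_node. destruct l; [contradiction|]. apply list_sum_in_le; auto. Qed.

Lemma leaves_child_lt a l : In a l -> (2 <= length l)%nat -> leaves a < leaves (Node l).
Proof.
  intros H Hl. rewrite leaves_node. destruct l as [|b l]; [contradiction|].
  apply in_split in H as [l1 [l2 E]]. rewrite E, map_app, list_sum_app. simpl.
  destruct l1 as [|c l1]; destruct l2 as [|d l2]; simpl in *.
  - inversion E; subst. simpl in Hl; lia.
  - pose proof (leaves_pos d); lia.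
  - pose proof (leaves_pos c); lia.
  - pose proof (leaves_pos c); lia.
Qed.

Lemma subtrees_leaves t u : In u (subtrees t) -> leaves u <= leaves t.
Proof.
  induction t as [l IH] using tree_sind; cbn [subtrees In]; intros [E|H]; [subst; apply le_n|].
  apply in_flat_map in H as [a [Ha Hu]]. pose proof (IH a Ha Hu). pose proof (leaves_child a l Ha). lia.
Qed.

Lemma length_le_leaves l : l <> [] -> length l <= leaves (Node l).
Proof.
  intros Hne; rewrite leaves_node. destruct l as [|b l]; [congruence|]. clear Hne.
  change (length (b::l) <= list_sum (map leaves (b::l))). generalize (b::l). induction l0; simpl; auto.
  pose proof (leaves_pos a); lia.
Qed.

Fixpoint words {A} (k : nat) (L : list A) : list (list A) :=
  match k with 0 => [[]] | S k => flat_map (fun a => map (cons a) (words k L)) L end.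
Definition upto_words {A} (w : nat) (L : list A) := flat_map (fun k => words k L) (seq 0 (S w)).
Fixpoint enum (d w : nat) : list tree :=
  match d with 0 => [Node []] | S d => map Node (upto_words w (enum d w)) end.

Fixpoint bnd (d w : nat) (t : tree) : Prop :=
  match d, t with
  | 0, Node l => l = []
  | S d', Node l => length l <= w /\ Forall (bnd d' w) l
  end.

Lemma words_in {A} (L : list A) l : (forall a, In a l -> In a L) -> In l (words (length l) L).
Proof. induction l; simpl; auto. intros H. apply in_flat_map. exists a; split; auto.
  apply in_map. apply IHl; auto. Qed.

Lemma bnd_enum d w t : bnd d w t -> In t (enum d w).
Proof.
  revert t; induction d; intros [l] H; simpl in H.
  - subst; simpl; auto.
  - destruct H as [Hl Hf]. change (In (Node l) (map Node (upto_words w (enum d w)))). apply in_map. unfold upto_words. apply in_flat_map.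
    exists (length l); split; [apply in_seq; lia|]. apply words_in.
    intros a Ha. apply IHd. rewrite Forall_forall in Hf; auto.
Qed.

Lemma hier_bnd d w t : hierarchy t -> leaves t <= S d -> leaves t <= w -> bnd d w t.
Proof.
  revert t; induction d; intros [l] Hh H1 H2.
  - simpl. destruct l as [|a l]; auto. exfalso. apply hier_node in Hh as [Hl _].
    destruct l as [|b l]; [simpl in Hl; lia|].
    pose proof (leaves_child_lt a (a::b::l) (or_introl eq_refl) ltac:(simpl; lia)). pose proof (leaves_pos a). lia.
  - simpl. destruct l as [|a l]; [split; [simpl; lia|constructor]|].
    apply hier_node in Hh as [Hl Hf]. split.
    + pose proof (length_le_leaves (a::l) ltac:(discriminate)). lia.
    + apply Forall_forall; intros c Hc. destruct l as [|b l]; [simpl in Hl; lia|].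
      pose proof (leaves_child_lt c _ Hc ltac:(simpl; lia)). pose proof (leaves_child c _ Hc).
      apply IHd; [rewrite Forall_forall in Hf; auto|lia|lia].
Qed.

Fixpoint pwni (s : list tree) : Prop :=
  match s with [] => True | a :: s' => (forall b, In b s' -> ~ iso a b) /\ pwni s' end.

Lemma reps_exist_gen (P : tree -> Prop) (L : list tree) :
  exists s, Forall P s /\ pwni s /\ forall t, In t L -> P t -> exists u, In u s /\ iso t u.
Proof.
  induction L as [|a L IH].
  - exists []; simpl; repeat split; auto. intros t [].
  - destruct IH as [s [Hf [Hp Hc]]].
    destruct (classic (P a /\ forall u, In u s -> ~ iso a u)) as [[Pa Hn]|Hno].
    + exists (a :: s); simpl; repeat split; auto.
      intros t [E|Ht] Pt; [subst; exists t; split; auto; apply iso_refl|].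
      destruct (Hc t Ht Pt) as [u [? ?]]; eauto.
    + exists s; repeat split; auto. intros t [E|Ht] Pt; auto. subst.
      apply not_and_or in Hno as [Hno|Hno]; [contradiction|].
      apply not_all_ex_not in Hno as [u Hu]. apply imply_to_and in Hu as [Hu Hu'].
      apply NNPP in Hu'. eauto.
Qed.

Lemma pwni_nth s d : pwni s -> forall i j, i < length s -> j < length s -> i <> j -> ~ iso (nth i s d) (nth j s d).
Proof.
  induction s as [|a s IH]; simpl; [intros; lia|]. intros [Ha Hs] i j Hi Hj Hij.
  destruct i; destruct j; try lia.
  - apply Ha. apply nth_In; lia.
  - intros Hiso. apply (Ha (nth i s d)); [apply nth_In; lia|]. apply iso_sym; auto.
  - apply IH; auto; lia.
Qed.

Lemma nth_pwni s d : (forall i j, i < length s -> j < length s -> i <> j -> ~ iso (nth i s d) (nth j s d)) -> pwni s.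
Proof.
  induction s as [|a s IH]; simpl; intros H; auto. split.
  - intros b Hb. apply (In_nth _ _ d) in Hb as [j [Hj E]]. subst. apply (H 0 (S j)); lia.
  - apply IH. intros i j Hi Hj Hij. apply (H (S i) (S j)); lia.
Qed.

Definition P_ (Q : tree -> Prop) (n : nat) (t : tree) : Prop := hierarchy t /\ leaves t = n /\ Q t.

Lemma cc_exists Q n : exists k, classes_count (P_ Q n) k.
Proof.
  destruct (reps_exist_gen (P_ Q n) (enum n n)) as [s [Hf [Hp Hc]]].
  exists (length s), s. repeat split; auto.
  - intros i j Hi Hj Hij. apply pwni_nth; auto.
  - intros t Pt. apply Hc; auto. apply bnd_enum. destruct Pt as [Hh [Hl _]]. apply hier_bnd; auto; lia.
Qed.

Lemma reps_spec Q n : exists s, length s = num_classes (P_ Q n) /\ Forall (P_ Q n) s /\ pwni s /\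
   forall t, P_ Q n t -> exists u, In u s /\ iso t u.
Proof.
  pose proof (epsilon_spec (inhabits 0%nat) _ (cc_exists Q n)) as H.
  fold (num_classes (P_ Q n)) in H. destruct H as [s [H1 [H2 [H3 H4]]]].
  exists s; repeat split; auto. eapply nth_pwni; eauto.
Qed.

Definition reps Q n : list tree := proj1_sig (constructive_indefinite_description _ (reps_spec Q n)).

Lemma reps_len Q n : length (reps Q n) = num_classes (P_ Q n).
Proof. unfold reps; destruct (constructive_indefinite_description _ _) as [s H]; simpl; tauto. Qed.
Lemma reps_P Q n t : In t (reps Q n) -> P_ Q n t.
Proof. unfold reps; destruct (constructive_indefinite_description _ _) as [s H]; simpl.
  destruct H as [_ [H _]]. rewrite Forall_forall in H; auto. Qed.
Lemma reps_pwni Q n : pwni (reps Q n).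
Proof. unfold reps; destruct (constructive_indefinite_description _ _) as [s H]; simpl; tauto. Qed.
Lemma reps_cover Q n t : P_ Q n t -> exists u, In u (reps Q n) /\ iso t u.
Proof. unfold reps; destruct (constructive_indefinite_description _ _) as [s H]; simpl.
  destruct H as [_ [_ [_ H]]]; auto. Qed.

Lemma hier_gf_eq Q n : (1 <= n)%nat -> hier_gf Q n = INR (length (reps Q n)).
Proof. intros Hn. rewrite reps_len. destruct n; [lia|]. reflexivity. Qed.

Lemma pigeon {A} (l : list A) (K : nat) (R : A -> nat -> Prop) :
  NoDup l -> (forall x, In x l -> exists i, i < K /\ R x i) ->
  (forall x y i, In x l -> In y l -> R x i -> R y i -> x = y) -> length l <= K.
Proof.
  revert l; induction K; intros l Hnd Hex Hinj.
  - destruct l as [|a l]; simpl; auto. destruct (Hex a (or_introl eq_refl)) as [i [Hi _]]; lia.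
  - destruct (classic (exists x, In x l /\ R x K)) as [[x [Hx HR]]|Hno].
    + apply in_split in Hx as [l1 [l2 E]]. subst l.
      pose proof (NoDup_remove _ _ _ Hnd) as [Hnd' Hnin].
      assert (length (l1 ++ l2) <= K).
      { apply IHK; auto.
        - intros y Hy. assert (In y (l1 ++ x :: l2)) as Hy'.
          { apply in_app_or in Hy; apply in_or_app; destruct Hy; simpl; auto. }
          destruct (Hex y Hy') as [i [Hi HRy]]. exists i; split; auto.
          destruct (Nat.eq_dec i K); [|lia]. subst. exfalso.
          assert (y = x) by (apply (Hinj y x K); auto; apply in_or_app; simpl; auto). subst; auto.
        - intros y z i Hy Hz. apply Hinj; apply in_app_or in Hy; apply in_app_or in Hz;
          apply in_or_app; simpl; tauto. }
      rewrite length_app in *; simpl; lia.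
    + assert (length l <= K); [|lia]. apply IHK; auto.
      intros y Hy. destruct (Hex y Hy) as [i [Hi HRy]]. exists i; split; auto.
      destruct (Nat.eq_dec i K); [|lia]. subst. exfalso. apply Hno; eauto.
Qed.

Lemma count_le_reps {A} Q n (l : list A) (F : A -> tree) :
  NoDup l -> (forall x, In x l -> P_ Q n (F x)) ->
  (forall x y, In x l -> In y l -> iso (F x) (F y) -> x = y) -> length l <= length (reps Q n).
Proof.
  intros Hnd HP Hinj. apply (pigeon l _ (fun x i => iso (F x) (nth i (reps Q n) (Node [])))); auto.
  - intros x Hx. destruct (reps_cover Q n (F x) (HP x Hx)) as [u [Hu Hi]].
    apply (In_nth _ _ (Node [])) in Hu as [i [Hi' E]]. subst. eauto.
  - intros x y i Hx Hy H1 H2. apply Hinj; auto. eapply iso_trans; [exact H1|]. apply iso_sym; auto.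
Qed.

Definition isob (a c : tree) : bool := if excluded_middle_informative (iso a c) then true else false.

Lemma isob_true a c : isob a c = true <-> iso a c.
Proof. unfold isob; destruct (excluded_middle_informative _); split; auto; discriminate. Qed.
Lemma isob_false a c : isob a c = false <-> ~ iso a c.
Proof. unfold isob; destruct (excluded_middle_informative _); split; auto; try discriminate; tauto. Qed.

Lemma isob_iso_l a b c : iso a b -> isob a c = isob b c.
Proof. intros H. unfold isob. destruct (excluded_middle_informative (iso a c)), (excluded_middle_informative (iso b c)); auto.
  - exfalso; apply n; eapply iso_trans; [apply iso_sym; exact H|auto].
  - exfalso; apply n; eapply iso_trans; [exact H|auto]. Qed.

Definition cnt (c : tree) (l : list tree) : nat := length (filter (fun a => isob a c) l).
Definition vec (L l : list tree) : list nat := map (fun c => cnt c l) L.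

Lemma cnt_nil c : cnt c [] = 0. Proof. reflexivity. Qed.
Lemma cnt_cons c a l : cnt c (a :: l) = (if isob a c then 1 else 0) + cnt c l.
Proof. unfold cnt; simpl; destruct (isob a c); reflexivity. Qed.
Lemma cnt_app c l1 l2 : cnt c (l1 ++ l2) = cnt c l1 + cnt c l2.
Proof. unfold cnt. rewrite filter_app, length_app; auto. Qed.

Lemma cnt_perm c l l' : Permutation l l' -> cnt c l = cnt c l'.
Proof. induction 1; auto.
  - rewrite !(cnt_cons c x). lia.
  - rewrite !cnt_cons. lia.
  - lia. Qed.

Lemma cnt_F2 c l1 l2 : Forall2 iso l1 l2 -> cnt c l1 = cnt c l2.
Proof. induction 1; auto. rewrite !cnt_cons, (isob_iso_l x y c H). lia. Qed.

Lemma vec_iso L l l' : iso (Node l) (Node l') -> vec L l = vec L l'.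
Proof. intros H. destruct (iso_inv _ _ H) as [l1 [Hp Hf]]. unfold vec. apply map_ext; intros c.
  rewrite (cnt_perm c _ _ Hp). apply cnt_F2; auto. Qed.

Lemma map_eq_in {A B} (f g : A -> B) L : map f L = map g L -> forall c, In c L -> f c = g c.
Proof. induction L; simpl; intros H c Hc; [contradiction|]. injection H; intros. destruct Hc; subst; auto. Qed.

Lemma cnt_pos_in c l : 0 < cnt c l -> exists b, In b l /\ iso b c.
Proof. induction l as [|a l IH]; [rewrite cnt_nil; intros; lia|]. rewrite cnt_cons. destruct (isob a c) eqn:E.
  - intros _. exists a; split; [left; auto|]. apply isob_true; auto.
  - intros H. destruct (IH ltac:(lia)) as [b [? ?]]. exists b; split; [right|]; auto. Qed.

Lemma cnt_in_pos c l b : In b l -> iso b c -> 0 < cnt c l.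
Proof. induction l as [|a l IH]; [simpl; tauto|]. rewrite cnt_cons. intros [E|H] Hi.
  - subst. apply isob_true in Hi. rewrite Hi. lia.
  - specialize (IH H Hi). lia. Qed.

Lemma match_lists L : forall l l', (forall c, In c L -> cnt c l = cnt c l') ->
  (forall a, In a l -> exists c, In c L /\ iso a c) -> (forall b, In b l' -> exists c, In c L /\ iso b c) ->
  exists l1, Permutation l l1 /\ Forall2 iso l1 l'.
Proof.
  induction l as [|a l IH]; intros l' Hc H1 H2.
  - destruct l' as [|b l']; [exists []; split; constructor|].
    destruct (H2 b (or_introl eq_refl)) as [c [Hc1 Hc2]].
    pose proof (cnt_in_pos c (b :: l') b (or_introl eq_refl) Hc2). rewrite <- Hc in H; auto. rewrite cnt_nil in H; lia.
  - destruct (H1 a (or_introl eq_refl)) as [c [HcL Hac]].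
    pose proof (cnt_in_pos c (a :: l) a (or_introl eq_refl) Hac) as Hpos. rewrite Hc in Hpos; auto.
    destruct (cnt_pos_in c l' Hpos) as [b [Hb Hbc]].
    assert (iso a b) as Hab by (eapply iso_trans; [exact Hac|apply iso_sym; auto]).
    apply in_split in Hb as [la [lb E]]. subst l'.
    destruct (IH (la ++ lb)) as [l1 [Hp Hf]].
    + intros c' Hc'. specialize (Hc c' Hc'). rewrite cnt_cons, !cnt_app, cnt_cons in Hc. rewrite cnt_app.
      rewrite (isob_iso_l a b c' Hab) in Hc. lia.
    + intros x Hx; apply H1; right; auto.
    + intros x Hx; apply H2. apply in_app_or in Hx; apply in_or_app; simpl; tauto.
    + apply Forall2_app_inv_r in Hf as [l1a [l1b [Ha [Hb E]]]]. subst l1.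
      exists (l1a ++ a :: l1b). split.
      * eapply perm_trans; [apply perm_skip; exact Hp|]. apply Permutation_middle.
      * apply Forall2_app; auto.
Qed.

Lemma match_iso L l l' : vec L l = vec L l' ->
  (forall a, In a l -> exists c, In c L /\ iso a c) -> (forall b, In b l' -> exists c, In c L /\ iso b c) ->
  iso (Node l) (Node l').
Proof. intros Hv H1 H2. destruct (match_lists L l l') as [l1 [? ?]]; auto.
  - intros c Hc. exact (map_eq_in _ _ _ Hv c Hc).
  - econstructor; eauto. Qed.

Lemma list_sum_map_add {A} (f g : A -> nat) l : list_sum (map (fun x => f x + g x) l) = list_sum (map f l) + list_sum (map g l).
Proof. induction l; simpl; lia. Qed.

Lemma sum_over_L (f : tree -> nat) L a : pwni L -> (forall x y, iso x y -> f x = f y) ->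
  (exists c, In c L /\ iso a c) -> list_sum (map (fun c => if isob a c then f c else 0) L) = f a.
Proof.
  intros Hp Hf. induction L as [|c0 L IH]; simpl; intros [c [Hc Hi]]; [contradiction|].
  destruct Hp as [Hn Hp]. destruct (isob a c0) eqn:E.
  - apply isob_true in E. rewrite (Hf _ _ E).
    assert (list_sum (map (fun c => if isob a c then f c else 0) L) = 0) as Z; [|lia].
    assert (forall c1, In c1 L -> isob a c1 = false) as Hno.
    { intros c1 H1. apply isob_false. intros Hi1. apply (Hn c1 H1). eapply iso_trans; [apply iso_sym; exact E|auto]. }
    clear -Hno. induction L as [|c1 L IH2]; simpl; auto. rewrite Hno by (left; auto).
    apply IH2. intros; apply Hno; right; auto.
  - apply isob_false in E. destruct Hc as [Hc|Hc]; [subst; contradiction|]. rewrite IH; eauto.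
Qed.

Lemma sum_cnt (f : tree -> nat) L l : pwni L -> (forall x y, iso x y -> f x = f y) ->
  (forall a, In a l -> exists c, In c L /\ iso a c) ->
  list_sum (map (fun c => cnt c l * f c) L) = list_sum (map f l).
Proof.
  intros Hp Hf. induction l as [|a l IH]; intros Hc.
  - simpl. clear. induction L; simpl; auto.
  - simpl. rewrite <- IH by (intros; apply Hc; right; auto).
    rewrite <- (sum_over_L f L a Hp Hf (Hc a (or_introl eq_refl))).
    rewrite <- list_sum_map_add. f_equal. apply map_ext. intros c. rewrite cnt_cons. destruct (isob a c); lia.
Qed.

Fixpoint wt (ws mu : list nat) : nat :=
  match ws, mu with w :: ws', j :: mu' => j * w + wt ws' mu' | _, _ => 0 end.

Lemma wt_map {A} (g h : A -> nat) L : wt (map g L) (map h L) = list_sum (map (fun c => h c * g c) L).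
Proof. induction L; simpl; auto. Qed.

Lemma wt_vec L l : pwni L -> (forall a, In a l -> exists c, In c L /\ iso a c) ->
  wt (map leaves L) (vec L l) = list_sum (map leaves l).
Proof. intros. unfold vec. rewrite wt_map. apply sum_cnt; auto. apply leaves_iso. Qed.

Lemma csum_vec L l : pwni L -> (forall a, In a l -> exists c, In c L /\ iso a c) ->
  list_sum (vec L l) = length l.
Proof. intros. unfold vec.
  transitivity (list_sum (map (fun c => cnt c l * (fun _ => 1) c) L)).
  - f_equal. apply map_ext; intros; lia.
  - rewrite sum_cnt; auto. clear. induction l; simpl; auto.
Qed.

Fixpoint chl (L : list tree) (mu : list nat) : list tree :=
  match L, mu with c :: L', j :: mu' => repeat c j ++ chl L' mu' | _, _ => [] end.

Lemma chl_in L mu a : In a (chl L mu) -> In a L.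
Proof. revert mu; induction L; intros [|j mu]; simpl; try tauto.
  intros H; apply in_app_or in H as [H|H]; [apply repeat_spec in H; auto|right; eauto]. Qed.

Lemma cnt_repeat c a j : cnt c (repeat a j) = if isob a c then j else 0.
Proof. induction j; simpl; [destruct (isob a c); auto|]. rewrite cnt_cons, IHj. destruct (isob a c); lia. Qed.

Lemma vec_chl L mu : pwni L -> length mu = length L -> vec L (chl L mu) = mu.
Proof.
  revert mu; induction L as [|c L IH]; intros [|j mu] Hp Hl; simpl in *; try lia; auto.
  destruct Hp as [Hn Hp]. f_equal.
  - rewrite cnt_app, cnt_repeat. assert (isob c c = true) as E by (apply isob_true, iso_refl). rewrite E.
    assert (cnt c (chl L mu) = 0); [|lia].
    destruct (cnt c (chl L mu)) eqn:Z; auto. exfalso.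
    destruct (cnt_pos_in c (chl L mu) ltac:(lia)) as [b [Hb Hbc]].
    apply (Hn b (chl_in _ _ _ Hb)). apply iso_sym; auto.
  - rewrite <- (IH mu Hp ltac:(lia)) at 2. unfold vec. apply map_ext_in. intros c' Hc'.
    rewrite cnt_app, cnt_repeat. destruct (isob c c') eqn:E; auto.
    apply isob_true in E. exfalso; apply (Hn c' Hc' E).
Qed.

Lemma chl_leaves L mu : list_sum (map leaves (chl L mu)) = wt (map leaves L) mu.
Proof. revert mu; induction L; intros [|j mu]; simpl; auto.
  rewrite map_app, list_sum_app, IHL. f_equal. induction j; simpl; lia. Qed.

Lemma chl_length L mu : length mu = length L -> length (chl L mu) = list_sum mu.
Proof. revert mu; induction L; intros [|j mu]; simpl; intros; try lia.
  rewrite length_app, repeat_length, IHL; lia. Qed.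

Fixpoint box (r J : nat) : list (list nat) :=
  match r with 0 => [[]] | S r => flat_map (fun j => map (cons j) (box r J)) (seq 0 (S J)) end.

Lemma in_box r J mu : length mu = r -> (forall j, In j mu -> j <= J) -> In mu (box r J).
Proof. revert mu; induction r; intros [|j mu]; intros Hl Hj; simpl in Hl; try lia; [simpl; auto|].
  change (In (j :: mu) (flat_map (fun j => map (cons j) (box r J)) (seq 0 (S J)))).
  apply in_flat_map. exists j; split; [apply in_seq; specialize (Hj j (or_introl eq_refl)); lia|].
  apply in_map. apply IHr; [lia|intros; apply Hj; right; auto]. Qed.

Lemma box_NoDup r J : NoDup (box r J).
Proof. induction r; [constructor; auto; constructor|]. cbn [box].
  generalize (seq_NoDup (S J) 0). generalize (seq 0 (S J)). intros s Hs. induction s; simpl; [constructor|].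
  inversion Hs; subst. apply NoDup_app.
  - apply FinFun.Injective_map_NoDup; auto. intros x y E; injection E; auto.
  - apply IHs; auto.
  - intros x Hx Hx'. apply in_map_iff in Hx as [y [E _]]. subst.
    apply in_flat_map in Hx' as [j [Hj Hx']]. apply in_map_iff in Hx' as [z [E _]]. injection E; intros; subst. contradiction.
Qed.

Fixpoint units (r : nat) : list (list nat) :=
  match r with 0 => [] | S r => (1 :: repeat 0 r) :: map (cons 0) (units r) end.

Lemma units_length r mu : In mu (units r) -> length mu = r /\ list_sum mu = 1 /\ forall j, In j mu -> j <= 1.
Proof. revert mu; induction r; simpl; intros mu H; [contradiction|]. destruct H as [E|H].
  - subst. simpl. rewrite repeat_length. split; auto. split; [clear; induction r; simpl; auto|].
    intros j [E|Hj]; [lia|apply repeat_spec in Hj; lia].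
  - apply in_map_iff in H as [nu [E H]]. subst. destruct (IHr nu H) as [? [? ?]]. simpl. split; auto. split; auto.
    intros j [E|Hj]; [lia|auto].
Qed.

Lemma units_NoDup r : NoDup (units r).
Proof. induction r; simpl; constructor.
  - intros H. apply in_map_iff in H as [x [E _]]. discriminate.
  - apply FinFun.Injective_map_NoDup; auto. intros x y E; injection E; auto. Qed.
Open Scope R_scope.

Definition sumR {A} (f : A -> R) (l : list A) : R := fold_right (fun a acc => f a + acc) 0 l.
Definition prodR {A} (f : A -> R) (l : list A) : R := fold_right (fun a acc => f a * acc) 1 l.

Arguments sumR {A} f l : simpl never.
Arguments prodR {A} f l : simpl never.

Lemma sumR_nil {A} (f : A -> R) : sumR f [] = 0. Proof. reflexivity. Qed.
Lemma sumR_cons {A} (f : A -> R) a l : sumR f (a :: l) = f a + sumR f l. Proof. reflexivity. Qed.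
Lemma sumR_app {A} (f : A -> R) l1 l2 : sumR f (l1 ++ l2) = sumR f l1 + sumR f l2.
Proof. induction l1; simpl; [rewrite sumR_nil; lra|]. rewrite !sumR_cons, IHl1; lra. Qed.
Lemma sumR_map {A B} (f : B -> R) (g : A -> B) l : sumR f (map g l) = sumR (fun a => f (g a)) l.
Proof. induction l; simpl; auto. rewrite !sumR_cons, IHl; auto. Qed.
Lemma sumR_nonneg {A} (f : A -> R) l : (forall a, In a l -> 0 <= f a) -> 0 <= sumR f l.
Proof. induction l; simpl; intros H; [rewrite sumR_nil; lra|]. rewrite sumR_cons.
  pose proof (H a (or_introl eq_refl)). pose proof (IHl (fun x Hx => H x (or_intror Hx))). lra. Qed.
Lemma sumR_le {A} (f g : A -> R) l : (forall a, In a l -> f a <= g a) -> sumR f l <= sumR g l.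
Proof. induction l; simpl; intros H; [rewrite !sumR_nil; lra|]. rewrite !sumR_cons.
  pose proof (H a (or_introl eq_refl)). pose proof (IHl (fun x Hx => H x (or_intror Hx))). lra. Qed.
Lemma sumR_ext {A} (f g : A -> R) l : (forall a, In a l -> f a = g a) -> sumR f l = sumR g l.
Proof. intros H; apply Rle_antisym; apply sumR_le; intros a Ha; rewrite H; auto; lra. Qed.
Lemma sumR_plus {A} (f g : A -> R) l : sumR (fun a => f a + g a) l = sumR f l + sumR g l.
Proof. induction l; [rewrite ?sumR_nil; simpl; lra|]. rewrite !sumR_cons, IHl; lra. Qed.
Lemma sumR_scal {A} (f : A -> R) c l : sumR (fun a => c * f a) l = c * sumR f l.
Proof. induction l; [rewrite ?sumR_nil; simpl; lra|]. rewrite !sumR_cons, IHl; lra. Qed.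
Lemma sumR_perm {A} (f : A -> R) l l' : Permutation l l' -> sumR f l = sumR f l'.
Proof. induction 1; auto; rewrite ?sumR_cons; lra. Qed.
Lemma sumR_flat_map {A B} (f : B -> R) (g : A -> list B) l : sumR f (flat_map g l) = sumR (fun a => sumR f (g a)) l.
Proof. induction l; simpl; auto. rewrite sumR_app, sumR_cons, IHl; auto. Qed.
Lemma sumR_const {A} c (l : list A) : sumR (fun _ => c) l = INR (length l) * c.
Proof. induction l; [rewrite ?sumR_nil; simpl; lra|]. rewrite sumR_cons, IHl. simpl length. rewrite S_INR; lra. Qed.

Lemma sumR_incl {A} (f : A -> R) l L : (forall a, 0 <= f a) -> NoDup l -> incl l L -> sumR f l <= sumR f L.
Proof.
  intros Hf; revert L; induction l as [|a l IH]; intros L Hnd Hi.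
  - rewrite sumR_nil. apply sumR_nonneg; auto.
  - assert (In a L) as Ha by (apply Hi; left; auto). apply in_split in Ha as [L1 [L2 E]]. subst L.
    rewrite (sumR_perm f (L1 ++ a :: L2) (a :: L1 ++ L2)) by (apply Permutation_sym, Permutation_middle).
    rewrite !sumR_cons. inversion Hnd; subst. apply Rplus_le_compat_l. apply IH; auto.
    intros y Hy. assert (In y (L1 ++ a :: L2)) as Hy' by (apply Hi; right; auto).
    apply in_app_or in Hy'; apply in_or_app. destruct Hy' as [?|[E|?]]; auto. subst; contradiction.
Qed.

Lemma sumR_filter {A} (f : A -> R) (p : A -> bool) l : sumR f l = sumR f (filter p l) + sumR f (filter (fun a => negb (p a)) l).
Proof. induction l; simpl; [rewrite ?sumR_nil; simpl; lra|]. destruct (p a); simpl; rewrite !sumR_cons, IHl; lra. Qed.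

Lemma prodR_nil {A} (f : A -> R) : prodR f [] = 1. Proof. reflexivity. Qed.
Lemma prodR_cons {A} (f : A -> R) a l : prodR f (a :: l) = f a * prodR f l. Proof. reflexivity. Qed.
Lemma prodR_nonneg {A} (f : A -> R) l : (forall a, In a l -> 0 <= f a) -> 0 <= prodR f l.
Proof. induction l; intros H; [rewrite prodR_nil; lra|]. rewrite prodR_cons.
  apply Rmult_le_pos; [apply H; left; auto|apply IHl; intros; apply H; right; auto]. Qed.
Lemma prodR_le {A} (f g : A -> R) l : (forall a, In a l -> 0 <= f a <= g a) -> prodR f l <= prodR g l.
Proof. induction l; intros H; [rewrite !prodR_nil; lra|]. rewrite !prodR_cons.
  destruct (H a (or_introl eq_refl)). apply Rmult_le_compat; auto.
  - apply prodR_nonneg; intros; apply H; right; auto.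
  - apply IHl; intros; apply H; right; auto. Qed.
Lemma prodR_app {A} (f : A -> R) l1 l2 : prodR f (l1 ++ l2) = prodR f l1 * prodR f l2.
Proof. induction l1; simpl; [rewrite prodR_nil; lra|]. rewrite !prodR_cons, IHl1; lra. Qed.
Lemma prodR_map {A B} (f : B -> R) (g : A -> B) l : prodR f (map g l) = prodR (fun a => f (g a)) l.
Proof. induction l; simpl; auto. rewrite !prodR_cons, IHl; auto. Qed.

Lemma box_sum ws J x : sumR (fun mu => x ^ wt ws mu) (box (length ws) J) =
  prodR (fun w => sumR (fun j => x ^ (j * w)) (seq 0 (S J))) ws.
Proof.
  induction ws as [|w ws IH]; [simpl; rewrite prodR_nil, sumR_cons, sumR_nil; simpl; lra|].
  cbn [length box]. rewrite sumR_flat_map, prodR_cons.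
  rewrite Rmult_comm, <- sumR_scal. apply sumR_ext. intros j _.
  rewrite sumR_map. cbn [wt]. rewrite <- IH, Rmult_comm, <- sumR_scal. apply sumR_ext. intros mu _.
  rewrite pow_add; lra.
Qed.

Lemma geom_sum u J : u <> 1 -> sumR (fun j => u ^ j) (seq 0 (S J)) = (1 - u ^ (S J)) / (1 - u).
Proof.
  intros Hu. induction J.
  - simpl. rewrite sumR_cons, sumR_nil. field. lra.
  - rewrite seq_S, sumR_app, IHJ, sumR_cons, sumR_nil. simpl. field. lra.
Qed.

Lemma geom_le u J : 0 <= u < 1 -> sumR (fun j => u ^ j) (seq 0 (S J)) <= 1 / (1 - u).
Proof. intros Hu. rewrite geom_sum by lra. unfold Rdiv. apply Rmult_le_compat_r.
  - apply Rlt_le, Rinv_0_lt_compat; lra.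
  - pose proof (pow_le u (S J) (proj1 Hu)); lra. Qed.

Lemma sumR_pow_mult x w J : sumR (fun j => x ^ (j * w)) (seq 0 (S J)) = sumR (fun j => (x ^ w) ^ j) (seq 0 (S J)).
Proof. apply sumR_ext; intros j _. rewrite <- pow_mult, Nat.mul_comm; auto. Qed.

Lemma sumR_in_le {A} (f : A -> R) l a : (forall b, In b l -> 0 <= f b) -> In a l -> f a <= sumR f l.
Proof. induction l; simpl; intros H Hi; [contradiction|]. rewrite sumR_cons. destruct Hi as [E|Hi].
  - subst. pose proof (sumR_nonneg f l (fun b Hb => H b (or_intror Hb))). lra.
  - pose proof (H a0 (or_introl eq_refl)). pose proof (IHl (fun b Hb => H b (or_intror Hb)) Hi). lra. Qed.

Lemma sumR_zero {A} (f : A -> R) l : (forall a, In a l -> f a = 0) -> sumR f l = 0.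
Proof. intros H. induction l; [apply sumR_nil|]. rewrite sumR_cons, H, IHl; [lra| |left]; auto.
  intros; apply H; right; auto. Qed.

Lemma sumR_group {A} (g : A -> nat) (f : nat -> R) (V : list A) (rng : list nat) :
  NoDup rng -> (forall mu, In mu V -> In (g mu) rng) ->
  sumR (fun mu => f (g mu)) V = sumR (fun n => INR (length (filter (fun mu => Nat.eqb (g mu) n) V)) * f n) rng.
Proof.
  intros Hnd. induction V as [|a V IH]; intros Hin.
  - rewrite sumR_nil. symmetry. apply sumR_zero; intros; simpl; lra.
  - rewrite sumR_cons, IH by (intros; apply Hin; right; auto).
    assert (In (g a) rng) as Hga by (apply Hin; left; auto). clear IH Hin.
    transitivity (sumR (fun n => (if Nat.eqb (g a) n then f n else 0) + INR (length (filter (fun mu => Nat.eqb (g mu) n) V)) * f n) rng).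
    + rewrite sumR_plus. f_equal. clear -Hnd Hga. symmetry.
      induction rng as [|b rng IH]; [contradiction|].
      rewrite sumR_cons. inversion Hnd as [|b' rng' Hnb Hnd']; subst. destruct Hga as [E|Hga].
      * rewrite E, Nat.eqb_refl. assert (sumR (fun n => if Nat.eqb (g a) n then f n else 0) rng = 0) as Z; [|lra].
        apply sumR_zero. intros n Hn. cbv beta.
        destruct (Nat.eqb (g a) n) eqn:En; auto. apply Nat.eqb_eq in En. exfalso; apply Hnb. rewrite E, En; auto.
      * destruct (Nat.eqb (g a) b) eqn:En.
        { apply Nat.eqb_eq in En. exfalso; apply Hnb. rewrite <- En; auto. }
        rewrite IH; auto. lra.
    + apply sumR_ext. intros n _. simpl filter. destruct (Nat.eqb (g a) n); simpl length; rewrite ?S_INR; lra.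
Qed.

Lemma prod_one_minus (l : list R) : (forall a, In a l -> 0 <= a <= 1) ->
  1 - sumR (fun a => a) l <= prodR (fun a => 1 - a) l.
Proof.
  induction l; intros H; [rewrite sumR_nil, prodR_nil; lra|]. rewrite sumR_cons, prodR_cons.
  destruct (H a (or_introl eq_refl)). specialize (IHl (fun b Hb => H b (or_intror Hb))).
  assert (0 <= prodR (fun a => 1 - a) l) by (apply prodR_nonneg; intros b Hb; destruct (H b (or_intror Hb)); lra).
  assert (0 <= sumR (fun a => a) l) by (apply sumR_nonneg; intros b Hb; destruct (H b (or_intror Hb)); lra).
  nra.
Qed.

Lemma prodR_inv_exp {A} (u : A -> R) l : (forall a, In a l -> 0 <= u a < 1) ->
  prodR (fun a => 1 / (1 - u a)) l = exp (sumR (fun a => - ln (1 - u a)) l).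
Proof.
  induction l; intros H; [rewrite prodR_nil, sumR_nil, exp_0; auto|].
  rewrite prodR_cons, sumR_cons, exp_plus, IHl by (intros; apply H; right; auto).
  f_equal. destruct (H a (or_introl eq_refl)). rewrite exp_Ropp, exp_ln by lra. field. lra.
Qed.

Definition psum (a : nat -> R) (x : R) (N : nat) : R := sumR (fun k => a k * x ^ k) (seq 0 (S N)).
Open Scope R_scope.

Definition aQ Q k := INR (length (reps Q k)).
Definition Lrep Q ks := flat_map (reps Q) ks.
Definition kids (t : tree) := match t with Node l => l end.

Lemma pwni_app s1 s2 : pwni s1 -> pwni s2 -> (forall a b, In a s1 -> In b s2 -> ~ iso a b) -> pwni (s1 ++ s2).
Proof. induction s1; simpl; auto. intros [H1 H2] H3 H4. split; [|apply IHs1; auto].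
  intros b Hb. apply in_app_or in Hb as [Hb|Hb]; auto. Qed.

Lemma Lrep_in Q ks c : In c (Lrep Q ks) -> exists k, In k ks /\ P_ Q k c.
Proof. unfold Lrep; intros H; apply in_flat_map in H as [k [Hk Hc]]. exists k; split; auto. apply reps_P; auto. Qed.

Lemma pwni_Lrep Q ks : NoDup ks -> pwni (Lrep Q ks).
Proof. induction 1; simpl; auto. apply pwni_app; auto. apply reps_pwni.
  intros a b Ha Hb Hi. apply reps_P in Ha as [_ [La _]]. apply Lrep_in in Hb as [k [Hk [_ [Lb _]]]].
  apply leaves_iso in Hi. subst. rewrite <- Hi in Hk. contradiction. Qed.

Lemma Lrep_cover Q ks a n : In n ks -> P_ Q n a -> exists c, In c (Lrep Q ks) /\ iso a c.
Proof. intros Hn Ha. destruct (reps_cover Q n a Ha) as [u [Hu Hi]]. exists u; split; auto.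
  unfold Lrep; apply in_flat_map; eauto. Qed.

Lemma sumR_Lrep Q ks (G : nat -> R) : sumR (fun c => G (leaves c)) (Lrep Q ks) = sumR (fun k => aQ Q k * G k) ks.
Proof. unfold Lrep. rewrite sumR_flat_map. apply sumR_ext. intros k _. unfold aQ. rewrite <- sumR_const.
  apply sumR_ext. intros c Hc. apply reps_P in Hc as [_ [E _]]. rewrite E; auto. Qed.

Lemma list_sum_in_le_gen {A} (f : A -> nat) l a : In a l -> (f a <= list_sum (map f l))%nat.
Proof. induction l; simpl; intros H; [contradiction|]. destruct H; subst; try lia. specialize (IHl H); lia. Qed.

Lemma vec_bound (W : list (list nat)) : exists J, forall mu, In mu W -> forall j, In j mu -> (j <= J)%nat.
Proof. exists (list_sum (map (fun mu => list_sum mu) W)). intros mu Hmu j Hj.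
  pose proof (list_sum_in_le_gen (fun mu => list_sum mu) W mu Hmu).
  pose proof (list_sum_in_le_gen (fun j => j) mu j Hj). rewrite map_id in H0. simpl in *. lia. Qed.

Lemma pow_lt1 x w : 0 <= x < 1 -> (1 <= w)%nat -> 0 <= x ^ w < 1.
Proof. intros Hx Hw. apply pow_lt_1_compat; auto; lia. Qed.

Lemma vecs_le_prod ws (W : list (list nat)) x : 0 <= x < 1 -> (forall w, In w ws -> (1 <= w)%nat) ->
  NoDup W -> (forall mu, In mu W -> length mu = length ws) ->
  sumR (fun mu => x ^ wt ws mu) W <= prodR (fun w => 1 / (1 - x ^ w)) ws.
Proof.
  intros Hx Hws Hnd Hl. destruct (vec_bound W) as [J HJ].
  apply Rle_trans with (sumR (fun mu => x ^ wt ws mu) (box (length ws) J)).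
  - apply sumR_incl; [intros; apply pow_le; lra|auto|]. intros mu Hmu. apply in_box; auto. apply HJ; auto.
  - rewrite box_sum. apply prodR_le. intros w Hw. rewrite sumR_pow_mult.
    pose proof (pow_lt1 x w Hx (Hws w Hw)). split; [apply sumR_nonneg; intros; apply pow_le; lra|].
    apply geom_le; lra.
Qed.

Lemma wt_zero ws r : wt ws (repeat 0%nat r) = 0%nat.
Proof. revert r; induction ws; intros [|r]; simpl; auto. Qed.

Lemma units_sum ws x : sumR (fun mu => x ^ wt ws mu) (units (length ws)) = sumR (fun w => x ^ w) ws.
Proof. induction ws as [|w ws IH]; simpl; [rewrite !sumR_nil; auto|].
  rewrite !sumR_cons, sumR_map. cbn [wt]. rewrite wt_zero. rewrite <- IH.
  replace (1 * w + 0)%nat with w by lia. f_equal. Qed.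

Lemma units_csum_nz r mu : In mu (units r) -> list_sum mu = 1%nat.
Proof. intros H; apply units_length in H; tauto. Qed.

Lemma csum_repeat0 r : list_sum (repeat 0%nat r) = 0%nat.
Proof. induction r; simpl; auto. Qed.

Section UB.
Variable Q : tree -> Prop.
Hypothesis Qsub : forall l a, Q (Node l) -> In a l -> Q a.

Lemma kids_cover N t k : In t (reps Q k) -> (k <= S N)%nat -> forall a, In a (kids t) -> exists c, In c (Lrep Q (seq 1 N)) /\ iso a c.
Proof.
  intros Ht Hk a Ha. apply reps_P in Ht as [Hh [Hl HQ]]. destruct t as [l]. simpl in Ha.
  apply hier_node in Hh as [Hlen Hall]. apply (Lrep_cover Q (seq 1 N) a (leaves a)).
  - apply in_seq. pose proof (leaves_pos a). destruct l as [|b [|b' l]]; [contradiction|simpl in Hlen; lia|].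
    pose proof (leaves_child_lt a _ Ha ltac:(simpl; lia)). lia.
  - split; [rewrite Forall_forall in Hall; auto|split; auto]. eapply Qsub; eauto.
Qed.

Lemma reps_big_kids t k : In t (reps Q k) -> (2 <= k)%nat -> (2 <= length (kids t))%nat.
Proof. intros Ht Hk. apply reps_P in Ht as [Hh [Hl _]]. destruct t as [l]. apply hier_node in Hh as [Hlen _].
  simpl. destruct l as [|b [|b' l]]; simpl in *; try lia. Qed.

Theorem UB N x (E : list (list nat)) : (1 <= N)%nat -> 0 <= x < 1 ->
  let L := Lrep Q (seq 1 N) in
  NoDup E -> (forall mu, In mu E -> length mu = length L /\ (2 <= list_sum mu)%nat) ->
  (forall mu t, In mu E -> In t (Lrep Q (seq 2 N)) -> vec L (kids t) <> mu) ->
  sumR (fun k => aQ Q k * x ^ k) (seq 2 N) + sumR (fun mu => x ^ wt (map leaves L) mu) E + 1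
   + sumR (fun k => aQ Q k * x ^ k) (seq 1 N) <= prodR (fun c => 1 / (1 - x ^ leaves c)) L.
Proof.
  intros HN Hx L HEnd HE HEd.
  set (R := Lrep Q (seq 2 N)).
  set (V := map (fun t => vec L (kids t)) R).
  set (ws := map leaves L).
  assert (HpL : pwni L) by (apply pwni_Lrep, seq_NoDup).
  assert (HRk : forall t, In t R -> exists k, (2 <= k <= S N)%nat /\ In t (reps Q k)).
  { intros t Ht. unfold R, Lrep in Ht. apply in_flat_map in Ht as [k [Hk Ht]]. apply in_seq in Hk. exists k; split; auto; lia. }
  assert (Hcov : forall t, In t R -> forall a, In a (kids t) -> exists c, In c L /\ iso a c).
  { intros t Ht. destruct (HRk t Ht) as [k [Hk Ht']]. apply (kids_cover N t k); auto; lia. }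
  assert (HVcs : forall mu, In mu V -> (2 <= list_sum mu)%nat /\ length mu = length ws).
  { intros mu Hmu. unfold V in Hmu. apply in_map_iff in Hmu as [t [E1 Ht]]. subst mu.
    split; [|unfold vec, ws; rewrite !length_map; auto].
    rewrite csum_vec by (auto || (apply Hcov; auto)). destruct (HRk t Ht) as [k [Hk Ht']]. apply (reps_big_kids t k); auto; lia. }
  assert (HVnd : NoDup V).
  { unfold V. assert (pwni R) as HpR by (apply pwni_Lrep, seq_NoDup).
    assert (forall t t', In t R -> In t' R -> vec L (kids t) = vec L (kids t') -> iso t t') as Hinj.
    { intros t t' Ht Ht' Hv. destruct t as [l]; destruct t' as [l']. apply (match_iso L); auto.
      - apply (Hcov (Node l) Ht).
      - apply (Hcov (Node l') Ht'). }
    clear -HpR Hinj. induction R as [|t R IH]; simpl; constructor.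
    - intros Hin. apply in_map_iff in Hin as [t' [Ev Ht']]. destruct HpR as [Hn _].
      apply (Hn t' Ht'). apply Hinj; simpl; auto.
    - apply IH; [destruct HpR; auto|]. intros; apply Hinj; simpl; auto. }
  set (Z := repeat 0%nat (length ws) :: units (length ws)).
  assert (HZnd : NoDup Z).
  { unfold Z. constructor; [|apply units_NoDup]. intros Hin. apply units_csum_nz in Hin. rewrite csum_repeat0 in Hin; lia. }
  assert (HZcs : forall mu, In mu Z -> (list_sum mu <= 1)%nat /\ length mu = length ws).
  { intros mu [E1|Hmu]. - subst. rewrite csum_repeat0, repeat_length; auto.
    - apply units_length in Hmu as [? [? _]]; lia. }
  set (Wl := V ++ E ++ Z).
  assert (HW : NoDup Wl).
  { unfold Wl. apply NoDup_app; [auto|apply NoDup_app; auto|].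
    - intros mu Hmu Hz. destruct (HE mu Hmu) as [_ H2]. destruct (HZcs mu Hz); lia.
    - intros mu Hmu Hin. apply in_app_or in Hin as [Hin|Hin].
      + unfold V in Hmu. apply in_map_iff in Hmu as [t [E1 Ht]]. apply (HEd mu t Hin Ht); auto.
      + destruct (HVcs mu Hmu). destruct (HZcs mu Hin); lia. }
  assert (Hws1 : forall w, In w ws -> (1 <= w)%nat).
  { intros w Hw. unfold ws in Hw. apply in_map_iff in Hw as [c [E1 _]]. subst. apply leaves_pos. }
  pose proof (vecs_le_prod ws Wl x Hx Hws1 HW) as Hle.
  assert (forall mu, In mu Wl -> length mu = length ws) as HWl.
  { intros mu Hmu. unfold Wl in Hmu. apply in_app_or in Hmu as [H|H]; [apply HVcs; auto|].
    apply in_app_or in H as [H|H]; [unfold ws; rewrite length_map; apply HE; auto|apply HZcs; auto]. }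
  specialize (Hle HWl).
  unfold Wl in Hle. rewrite !sumR_app in Hle. unfold Z in Hle. rewrite sumR_cons, wt_zero, units_sum in Hle.
  unfold ws in Hle. rewrite prodR_map in Hle.
  assert (sumR (fun mu => x ^ wt (map leaves L) mu) V = sumR (fun k => aQ Q k * x ^ k) (seq 2 N)) as EV.
  { unfold V. rewrite sumR_map. unfold R. rewrite <- (sumR_Lrep Q (seq 2 N) (fun k => x ^ k)).
    apply sumR_ext. intros t Ht. rewrite wt_vec; auto; [|apply (Hcov t Ht)].
    destruct (HRk t Ht) as [k [Hk Ht']]. pose proof (reps_big_kids t k Ht' ltac:(lia)).
    destruct t as [l]. simpl in *. destruct l; simpl in *; auto; lia. }
  rewrite EV in Hle.
  rewrite sumR_map in Hle. rewrite (sumR_Lrep Q (seq 1 N) (fun k => x ^ k) : sumR (fun c => x ^ leaves c) L = _) in Hle. simpl pow in Hle. unfold ws. lra.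
Qed.
End UB.
Open Scope R_scope.

Lemma GL Q ws (V : list (list nat)) (F : list nat -> tree) x n0 M :
  0 <= x -> (1 <= n0)%nat -> NoDup V ->
  (forall mu, In mu V -> P_ Q (wt ws mu) (F mu) /\ (n0 <= wt ws mu <= M)%nat) ->
  (forall mu mu', In mu V -> In mu' V -> iso (F mu) (F mu') -> mu = mu') ->
  sumR (fun mu => x ^ wt ws mu) V <= sumR (fun n => aQ Q n * x ^ n) (seq n0 M).
Proof.
  intros Hx Hn0 Hnd HP Hinj.
  rewrite (sumR_group (wt ws) (fun n => x ^ n) V (seq n0 M)); [|apply seq_NoDup|].
  - apply sumR_le. intros n Hn. apply Rmult_le_compat_r; [apply pow_le; auto|]. unfold aQ.
    apply le_INR. apply (count_le_reps Q n _ F).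
    + apply NoDup_filter; auto.
    + intros mu Hmu. apply filter_In in Hmu as [Hmu E]. apply Nat.eqb_eq in E. rewrite <- E. apply HP; auto.
    + intros mu mu' H1 H2. apply filter_In in H1 as [H1 _]. apply filter_In in H2 as [H2 _]. apply Hinj; auto.
  - intros mu Hmu. apply in_seq. destruct (HP mu Hmu) as [_ ?]. lia.
Qed.

Lemma csum0_repeat mu : list_sum mu = 0%nat -> mu = repeat 0%nat (length mu).
Proof. induction mu; simpl; auto. intros H. assert (a = 0%nat) by lia. subst. f_equal. apply IHmu; lia. Qed.

Lemma box_len r J mu : In mu (box r J) -> length mu = r.
Proof. revert mu; induction r; intros mu H; cbn [box] in H; [destruct H as [<-|[]]; auto|].
  apply in_flat_map in H as [j [_ H]]. apply in_map_iff in H as [nu [<- H]]. simpl; f_equal; auto. Qed.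

Definition QT : tree -> Prop := fun _ => True.

Lemma Lrep_hier ks c : In c (Lrep QT ks) -> hierarchy c.
Proof. intros H. apply Lrep_in in H as [k [_ [H _]]]; auto. Qed.

Theorem LB K J x : 0 <= x < 1 ->
  exists M, prodR (fun c => sumR (fun j => (x ^ leaves c) ^ j) (seq 0 (S J))) (Lrep QT (seq 1 K))
    <= 1 + sumR (fun n => aQ QT n * x ^ n) (seq 1 M) + sumR (fun n => aQ QT n * x ^ n) (seq 2 M).
Proof.
  intros Hx. set (L := Lrep QT (seq 1 K)). set (ws := map leaves L).
  assert (HpL : pwni L) by (apply pwni_Lrep, seq_NoDup).
  set (B := box (length ws) J).
  exists (list_sum (map (wt ws) B)).
  set (M := list_sum (map (wt ws) B)).
  assert (HBw : forall mu, In mu B -> (wt ws mu <= M)%nat) by (intros; apply list_sum_in_le_gen; auto).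
  assert (HBl : forall mu, In mu B -> length mu = length L).
  { intros mu Hmu. unfold B, ws in Hmu. rewrite length_map in Hmu. apply box_len in Hmu; auto. }
  assert (Hws1 : forall mu, In mu B -> (list_sum mu <= wt ws mu)%nat).
  { intros mu Hmu. specialize (HBl mu Hmu). unfold ws. clear -HBl. revert mu HBl.
    induction L as [|c L IH]; intros [|j mu]; simpl; intros H; try lia.
    pose proof (leaves_pos c). specialize (IH mu ltac:(lia)). nia. }
  replace (prodR (fun c => sumR (fun j => (x ^ leaves c) ^ j) (seq 0 (S J))) L)
    with (sumR (fun mu => x ^ wt ws mu) B).
  2:{ unfold B. rewrite box_sum. unfold ws. rewrite prodR_map. apply Rle_antisym; apply prodR_le; intros c _;
        rewrite sumR_pow_mult; split; try lra; apply sumR_nonneg; intros; apply pow_le, pow_le; lra. }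
  rewrite (sumR_filter _ (fun mu => Nat.eqb (list_sum mu) 0) B).
  rewrite (sumR_filter (fun mu => x ^ wt ws mu) (fun mu => Nat.eqb (list_sum mu) 1) (filter (fun a => negb ((fun mu => Nat.eqb (list_sum mu) 0) a)) B)).
  assert (HBnd : NoDup B) by apply box_NoDup.
  assert (sumR (fun mu => x ^ wt ws mu) (filter (fun mu => Nat.eqb (list_sum mu) 0) B) <= 1) as H0.
  { apply Rle_trans with (sumR (fun mu => x ^ wt ws mu) [repeat 0%nat (length L)]).
    - apply sumR_incl; [intros; apply pow_le; lra|apply NoDup_filter; auto|].
      intros mu Hmu. apply filter_In in Hmu as [Hmu E]. apply Nat.eqb_eq in E. left.
      rewrite (csum0_repeat mu E), (HBl mu Hmu); auto.
    - rewrite sumR_cons, sumR_nil, wt_zero. simpl; lra. }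
  set (F1 := fun mu => hd (Node []) (chl L mu)).
  assert (HF1 : forall mu, In mu B -> list_sum mu = 1%nat -> exists c, chl L mu = [c] /\ In c L).
  { intros mu Hmu Hs. pose proof (chl_length L mu (HBl mu Hmu)) as Hl. rewrite Hs in Hl.
    destruct (chl L mu) as [|c [|d l]] eqn:E; simpl in Hl; try lia. exists c; split; auto.
    apply (chl_in L mu); rewrite E; left; auto. }
  assert (sumR (fun mu => x ^ wt ws mu) (filter (fun mu => Nat.eqb (list_sum mu) 1) (filter (fun mu => negb (Nat.eqb (list_sum mu) 0)) B))
     <= sumR (fun n => aQ QT n * x ^ n) (seq 1 M)) as H1.
  { apply (GL QT ws _ F1); [lra|lia|apply NoDup_filter, NoDup_filter; auto| |].
    - intros mu Hmu. apply filter_In in Hmu as [Hmu E]. apply filter_In in Hmu as [Hmu _]. apply Nat.eqb_eq in E.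
      destruct (HF1 mu Hmu E) as [c [Ec Hc]]. unfold F1; rewrite Ec; simpl.
      pose proof (chl_leaves L mu) as Hlv. rewrite Ec in Hlv. simpl in Hlv. fold ws in Hlv.
      split; [split; [eapply Lrep_hier; eauto|split; [lia|exact I]]|]. pose proof (HBw mu Hmu). pose proof (leaves_pos c). lia.
    - intros mu mu' Hmu Hmu' Hi. apply filter_In in Hmu as [Hmu E]. apply filter_In in Hmu as [Hmu _]. apply Nat.eqb_eq in E.
      apply filter_In in Hmu' as [Hmu' E']. apply filter_In in Hmu' as [Hmu' _]. apply Nat.eqb_eq in E'.
      destruct (HF1 mu Hmu E) as [c [Ec Hc]]. destruct (HF1 mu' Hmu' E') as [c' [Ec' Hc']].
      unfold F1 in Hi; rewrite Ec, Ec' in Hi; simpl in Hi.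
      rewrite <- (vec_chl L mu HpL (HBl mu Hmu)), <- (vec_chl L mu' HpL (HBl mu' Hmu')), Ec, Ec'.
      unfold vec. apply map_ext; intros d. rewrite !cnt_cons, (isob_iso_l c c' d Hi). auto. }
  set (F2 := fun mu => Node (chl L mu)).
  assert (sumR (fun mu => x ^ wt ws mu) (filter (fun mu => negb (Nat.eqb (list_sum mu) 1)) (filter (fun mu => negb (Nat.eqb (list_sum mu) 0)) B))
     <= sumR (fun n => aQ QT n * x ^ n) (seq 2 M)) as H2.
  { apply (GL QT ws _ F2); [lra|lia|apply NoDup_filter, NoDup_filter; auto| |].
    - intros mu Hmu. apply filter_In in Hmu as [Hmu E]. apply filter_In in Hmu as [Hmu E0].
      apply Bool.negb_true_iff, Nat.eqb_neq in E. apply Bool.negb_true_iff, Nat.eqb_neq in E0.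
      pose proof (chl_length L mu (HBl mu Hmu)) as Hl.
      pose proof (chl_leaves L mu) as Hlv. fold ws in Hlv.
      assert (leaves (F2 mu) = wt ws mu) as Hlf.
      { unfold F2. rewrite leaves_node. destruct (chl L mu); simpl in Hl; [lia|]. auto. }
      split; [split; [|split; [auto|exact I]]|].
      + unfold F2. apply hier_node. split; [lia|]. apply Forall_forall. intros a Ha. eapply Lrep_hier. apply (chl_in L mu); eauto.
      + pose proof (HBw mu Hmu). pose proof (Hws1 mu Hmu). lia.
    - intros mu mu' Hmu Hmu' Hi. apply filter_In in Hmu as [Hmu _]. apply filter_In in Hmu as [Hmu _].
      apply filter_In in Hmu' as [Hmu' _]. apply filter_In in Hmu' as [Hmu' _].
      rewrite <- (vec_chl L mu HpL (HBl mu Hmu)), <- (vec_chl L mu' HpL (HBl mu' Hmu')).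
      apply vec_iso; auto. }
  cbv beta in *. lra.
Qed.
From Coquelicot Require Import Coquelicot.
Import ListNotations.
Open Scope R_scope.

Lemma sumR_sum_n (a : nat -> R) N : sumR a (seq 0 (S N)) = sum_n a N.
Proof. induction N.
  - rewrite sum_O. simpl. rewrite sumR_cons, sumR_nil; lra.
  - rewrite sum_Sn, seq_S, sumR_app, IHN, sumR_cons, sumR_nil. simpl. unfold plus; simpl. lra. Qed.

Lemma ser_part_le (a : nat -> R) N : (forall n, 0 <= a n) -> ex_series a -> sum_n a N <= Series a.
Proof. intros Hp He. apply (is_lim_seq_incr_compare (sum_n a)).
  - apply Series_correct; auto.
  - intros n. rewrite sum_Sn. unfold plus; simpl. specialize (Hp (S n)). lra. Qed.

Lemma ser_le_const (a : nat -> R) c : ex_series a -> (forall N, sum_n a N <= c) -> Series a <= c.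
Proof. intros He H. assert (Rbar_le (Series a) c) as R; [|simpl in R; auto].
  apply (is_lim_seq_le (sum_n a) (fun _ => c)); auto; [apply Series_correct; auto|apply is_lim_seq_const]. Qed.

Lemma ex_series_nonneg_le (a b : nat -> R) : (forall n, 0 <= a n <= b n) -> ex_series b -> ex_series a.
Proof. intros H Hb. apply (ex_series_le a b); auto. intros n. change (Rabs (a n) <= b n).
  destruct (H n). rewrite Rabs_right; lra. Qed.

Lemma ln_le_sub1 t : 0 < t -> ln t <= t - 1.
Proof. intros Ht. rewrite <- (ln_exp (t - 1)). apply ln_le; auto. pose proof (exp_ineq1_le (t - 1)). lra. Qed.

Definition q (u : R) : R := - ln (1 - u) - u.

Lemma q_nonneg u : 0 <= u < 1 -> 0 <= q u.
Proof. intros Hu. unfold q. pose proof (ln_le_sub1 (1 - u) ltac:(lra)). lra. Qed.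

Lemma q_diff u v : 0 <= u <= v -> v < 1 -> q v - q u <= (v - u) * v / (1 - v).
Proof. intros Hu Hv. unfold q.
  assert (ln (1 - u) - ln (1 - v) <= (1 - u) / (1 - v) - 1).
  { rewrite <- ln_div by lra. apply ln_le_sub1. apply Rdiv_lt_0_compat; lra. }
  assert ((1 - u) / (1 - v) - 1 - (v - u) = (v - u) * v / (1 - v)) by (field; lra). lra. Qed.

Lemma q_diff2 u v : 0 <= u <= v -> v <= 1/2 -> q v - q u <= 2 * v * (v - u).
Proof. intros Hu Hv. pose proof (q_diff u v Hu ltac:(lra)).
  assert ((v - u) * v / (1 - v) <= 2 * v * (v - u)); [|lra].
  unfold Rdiv. rewrite Rmult_assoc, (Rmult_comm v), <- Rmult_assoc.
  assert (/ (1 - v) <= 2).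
  { rewrite <- (Rinv_inv 2). apply Rinv_le_contravar; lra. }
  assert (0 <= (v - u) * v) by nra. nra. Qed.

Lemma q0 : q 0 = 0.
Proof. unfold q. replace (1 - 0) with 1 by lra. rewrite ln_1. lra. Qed.

Lemma q_le v : 0 <= v <= 1/2 -> q v <= 2 * v ^ 2.
Proof. intros Hv. pose proof (q_diff2 0 v ltac:(lra) ltac:(lra)). rewrite q0 in H. simpl. nra. Qed.

Lemma pow_diff x y k : 0 <= x <= y -> y ^ (S k) - x ^ (S k) <= INR (S k) * y ^ k * (y - x).
Proof. intros Hxy. induction k.
  - simpl; lra.
  - set (Y1 := y ^ S k) in *. set (X1 := x ^ S k) in *.
    assert (E1 : y ^ S (S k) = y * Y1) by reflexivity. assert (E2 : x ^ S (S k) = x * X1) by reflexivity.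
    assert (E3 : Y1 = y * y ^ k) by reflexivity.
    assert (HX : 0 <= X1 <= Y1) by (split; [apply pow_le; lra|apply pow_incr; lra]).
    assert (y * (Y1 - X1) <= y * (INR (S k) * y ^ k * (y - x))) by (apply Rmult_le_compat_l; lra).
    assert (X1 * (y - x) <= Y1 * (y - x)) by (apply Rmult_le_compat_r; lra).
    rewrite E1, E2. rewrite (S_INR (S k)).
    replace ((INR (S k) + 1) * Y1 * (y - x)) with (y * (INR (S k) * y ^ k * (y - x)) + Y1 * (y - x)) by (rewrite E3; ring).
    nra.
Qed.

Lemma nat_le_pow k : INR k <= (3/2) ^ k.
Proof. induction k as [|k IH]; [simpl; lra|].
  rewrite S_INR. change ((3/2) ^ S k) with (3/2 * (3/2) ^ k).
  destruct k as [|k]; [simpl; lra|]. destruct k as [|k]; [simpl; lra|].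
  assert (2 <= INR (S (S k))) by (rewrite !S_INR; pose proof (pos_INR k); lra). lra. Qed.

Lemma exp_sq b : exp (2 * b) = exp b ^ 2.
Proof. replace (2 * b) with (b + b) by lra. rewrite exp_plus. simpl; lra. Qed.

Lemma ln2_gt : 1/2 < ln 2.
Proof. assert (exp (1/2) < 2).
  { assert (exp (1/2) ^ 2 < 2 ^ 2); [|nra].
    rewrite <- exp_sq. replace (2 * (1/2)) with 1 by lra. pose proof exp_le_3. simpl; lra. }
  rewrite <- (ln_exp (1/2)). apply ln_increasing; auto. apply exp_pos. Qed.

Lemma ln14_lt : ln (14/10) < 35/100.
Proof. assert (14/10 < exp (35/100)).
  { replace (35/100) with (2 * (2 * (2 * (35/800)))) by lra. rewrite !exp_sq.
    pose proof (exp_ineq1_le (35/800)). assert (0 <= 1 + 35/800) by lra.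
    assert ((((1 + 35/800) ^ 2) ^ 2) ^ 2 <= ((exp (35/800) ^ 2) ^ 2) ^ 2).
    { apply pow_incr. split; [apply pow_le, pow_le; lra|]. apply pow_incr. split; [apply pow_le; lra|]. apply pow_incr; lra. }
    assert (14/10 < (((1 + 35/800) ^ 2) ^ 2) ^ 2) by (simpl; lra). lra. }
  rewrite <- (ln_exp (35/100)). apply ln_increasing; auto; lra. Qed.

Lemma aQ_0 Q : aQ Q 0 = 0.
Proof. unfold aQ. destruct (reps Q 0) as [|t l] eqn:E; auto. exfalso.
  assert (In t (reps Q 0)) as H by (rewrite E; left; auto). apply reps_P in H as [_ [H _]].
  pose proof (leaves_pos t); lia. Qed.

Lemma leaf1 t : hierarchy t -> leaves t = 1%nat -> t = Node [].
Proof. intros Hh Hl. destruct t as [[|a l]]; auto. exfalso. apply hier_node in Hh as [Hlen _].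
  destruct l as [|b l]; [simpl in Hlen; lia|].
  pose proof (leaves_child_lt a (a::b::l) (or_introl eq_refl) ltac:(simpl; lia)). pose proof (leaves_pos a). lia. Qed.

Lemma aQ_1_le Q : aQ Q 1 <= 1.
Proof. unfold aQ. pose proof (reps_pwni Q 1) as Hp.
  assert (forall t, In t (reps Q 1) -> t = Node []) as H.
  { intros t Ht. apply reps_P in Ht as [? [? _]]. apply leaf1; auto. }
  destruct (reps Q 1) as [|a [|b l]]; simpl; try lra. exfalso.
  destruct Hp as [Hn _]. apply (Hn b (or_introl eq_refl)).
  rewrite (H a), (H b); simpl; auto. apply iso_refl. Qed.

Lemma aQ_nonneg Q k : 0 <= aQ Q k.
Proof. apply pos_INR. Qed.

Lemma leaf_P Q : Q (Node []) -> P_ Q 1 (Node []).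
Proof. intros HQ. split; [apply hier_node; simpl; split; auto|split; auto]. Qed.

Lemma aQ_1_ge Q : Q (Node []) -> 1 <= aQ Q 1.
Proof. intros HQ. unfold aQ. destruct (reps_cover Q 1 (Node []) (leaf_P Q HQ)) as [u [Hu _]].
  destruct (reps Q 1); [contradiction|]. simpl length. rewrite S_INR. pose proof (pos_INR (length l)). lra. Qed.

Lemma pwni_NoDup s : pwni s -> NoDup s.
Proof. induction s; simpl; intros; constructor; destruct H; auto. intros Hin. apply (H a Hin). apply iso_refl. Qed.

Lemma pwni_inj s x y : pwni s -> In x s -> In y s -> iso x y -> x = y.
Proof. induction s as [|a s IH]; simpl; [tauto|]. intros [Hn Hp] [E1|H1] [E2|H2] Hi; subst; auto.
  - exfalso; apply (Hn y H2 Hi).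
  - exfalso; apply (Hn x H1). apply iso_sym; auto. Qed.

Lemma aQ_mono Q1 Q2 k : (forall t, Q1 t -> Q2 t) -> aQ Q1 k <= aQ Q2 k.
Proof. intros H. unfold aQ. apply le_INR. apply (count_le_reps Q2 k (reps Q1 k) (fun t => t)).
  - apply pwni_NoDup, reps_pwni.
  - intros x Hx. apply reps_P in Hx as [? [? ?]]. split; auto.
  - intros x y Hx Hy Hi. apply (pwni_inj (reps Q1 k)); auto. apply reps_pwni. Qed.

Lemma hier_gf_aQ Q n : hier_gf Q n = aQ Q n.
Proof. destruct n; [rewrite aQ_0; reflexivity|]. rewrite hier_gf_eq by lia. reflexivity. Qed.

Lemma QT_sub : forall l a, QT (Node l) -> In a l -> QT a.
Proof. unfold QT; auto. Qed.

Lemma prod_inv_le {A} (u : A -> R) l : (forall c, In c l -> 0 <= u c < 1) -> sumR u l < 1 ->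
  prodR (fun c => 1 / (1 - u c)) l <= 1 / (1 - sumR u l).
Proof.
  intros Hu Hs.
  assert (prodR (fun c => 1 / (1 - u c)) l = 1 / prodR (fun a => 1 - a) (map u l)) as E.
  { rewrite prodR_map. clear Hs. induction l; [rewrite !prodR_nil; lra|]. rewrite !prodR_cons, IHl by (intros; apply Hu; right; auto).
    destruct (Hu a (or_introl eq_refl)). assert (0 < prodR (fun c => 1 - u c) l).
    { clear IHl. induction l; [rewrite prodR_nil; lra|]. rewrite prodR_cons. destruct (Hu a0 (or_intror (or_introl eq_refl))).
      apply Rmult_lt_0_compat; [lra|]. apply IHl. intros c [Ec|Hc]; apply Hu; [left|right;right]; auto. }
    field. lra. }
  rewrite E. pose proof (prod_one_minus (map u l)) as H.
  rewrite sumR_map in H. assert (1 - sumR u l <= prodR (fun a => 1 - a) (map u l)) as H'.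
  { apply H. intros a Ha. apply in_map_iff in Ha as [c [<- Hc]]. destruct (Hu c Hc); lra. }
  unfold Rdiv. rewrite !Rmult_1_l. apply Rinv_le_contravar; lra.
Qed.

Definition hH k := aQ QT k.

Lemma apriori N : sumR (fun k => hH k * (3/20) ^ k) (seq 1 N) <= 1/4.
Proof.
  induction N as [|N IH]; [simpl; rewrite sumR_nil; lra|].
  destruct N as [|N].
  - simpl. rewrite sumR_cons, sumR_nil. pose proof (aQ_1_le QT). unfold hH. lra.
  - set (x := 3/20) in *. change (seq 1 (S (S N))) with (1%nat :: seq 2 (S N)). rewrite sumR_cons.
    pose proof (UB QT QT_sub (S N) x [] ltac:(lia) ltac:(unfold x; lra)) as HU. cbv zeta in HU.
    specialize (HU (NoDup_nil _) ltac:(intros mu [])  ltac:(intros mu t [])). rewrite sumR_nil in HU.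
    set (L := Lrep QT (seq 1 (S N))) in *.
    assert (sumR (fun c => x ^ leaves c) L = sumR (fun k => aQ QT k * x ^ k) (seq 1 (S N))) as ES.
    { apply (sumR_Lrep QT (seq 1 (S N)) (fun k => x ^ k)). }
    assert (Hy0 : 0 <= sumR (fun k => aQ QT k * x ^ k) (seq 1 (S N))).
    { apply sumR_nonneg; intros; apply Rmult_le_pos; [apply aQ_nonneg|apply pow_le; unfold x; lra]. }
    assert (prodR (fun c => 1 / (1 - x ^ leaves c)) L <= 1 / (1 - sumR (fun c => x ^ leaves c) L)) as HP.
    { apply prod_inv_le. - intros c _. apply pow_lt1; [unfold x; lra|apply leaves_pos].
      - rewrite ES. unfold hH in IH. lra. }
    rewrite ES in HP. unfold hH in *. simpl pow. pose proof (aQ_1_le QT).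
    set (y := sumR (fun k => aQ QT k * x ^ k) (seq 1 (S N))) in *.
    assert (1 / (1 - y) - 1 - y <= 1/12).
    { assert (0 < 1 - y) by lra. apply Rmult_le_reg_r with (1 - y); auto.
      unfold Rdiv. replace ((1 * / (1 - y) - 1 - y) * (1 - y)) with (y * y) by (field; lra). nra. }
    assert (aQ QT 1 * (x * 1) <= x) by (unfold x in *; nra).
    unfold x in *; lra.
Qed.

Definition Y := 31/100.

Lemma hH_nonneg k : 0 <= hH k. Proof. apply aQ_nonneg. Qed.
Lemma hH_0 : hH 0 = 0. Proof. apply aQ_0. Qed.

Lemma hH_bound k : (1 <= k)%nat -> hH k <= (1/4) * (20/3) ^ k.
Proof. intros Hk. pose proof (apriori k) as H.
  assert (hH k * (3/20) ^ k <= 1/4).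
  { eapply Rle_trans; [|exact H]. apply (sumR_in_le (fun k => hH k * (3/20)^k)).
    - intros; apply Rmult_le_pos; [apply hH_nonneg|apply pow_le; lra].
    - apply in_seq; lia. }
  assert ((20/3)^k * (3/20)^k = 1) as E by (rewrite <- Rpow_mult_distr; replace (20/3 * (3/20)) with 1 by lra; apply pow1).
  assert (0 < (20/3)^k) by (apply pow_lt; lra). pose proof (hH_nonneg k). nra. Qed.

Definition tt (x : R) (k : nat) : R := hH k * q (x ^ k).

Lemma tt_bound x k : 0 <= x <= Y -> 0 <= tt x k <= (1/2) * (13/20) ^ k.
Proof. intros Hx. unfold tt, Y in *. destruct k as [|k].
  - rewrite hH_0. pose proof (pow_le (13/20) 0). lra.
  - assert (0 <= x ^ S k <= x) as Hxk.
    { split; [apply pow_le; lra|]. simpl. pose proof (pow_le x k ltac:(lra)). assert (x ^ k <= 1) by (destruct k; [simpl; lra|]; pose proof (pow_lt_1_compat x (S k) ltac:(lra) ltac:(lia)); lra). nra. }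
    pose proof (q_nonneg (x ^ S k) ltac:(lra)). pose proof (q_le (x ^ S k) ltac:(lra)).
    pose proof (hH_bound (S k) ltac:(lia)). pose proof (hH_nonneg (S k)).
    split; [apply Rmult_le_pos; auto|].
    assert ((x ^ S k) ^ 2 = (x ^ 2) ^ S k) as E by (rewrite <- !pow_mult; f_equal; lia).
    rewrite E in *.
    assert ((20/3) ^ S k * (x ^ 2) ^ S k <= (13/20) ^ S k).
    { rewrite <- Rpow_mult_distr. apply pow_incr. split; [nra|]. simpl. nra. }
    assert (0 <= (20/3) ^ S k) by (apply pow_le; lra). assert (0 <= (x ^ 2) ^ S k) by (apply pow_le; nra).
    apply Rle_trans with ((1/4) * (20/3) ^ S k * (2 * (x ^ 2) ^ S k)); [apply Rmult_le_compat; auto|]. nra.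
Qed.

Lemma pow_le_1' x k : 0 <= x <= 1 -> x ^ k <= 1.
Proof. intros Hx. induction k; simpl; [lra|]. pose proof (pow_le x k (proj1 Hx)). nra. Qed.

Lemma tt_lip x y k : 0 <= x <= y -> y <= Y -> tt y k - tt x k <= (y - x) * ((1 / (2 * Y)) * (39/40) ^ k).
Proof. intros Hxy HyY. unfold tt, Y in *. assert (0 < 1 / (2 * (31/100))) by lra.
  destruct k as [|k].
  - rewrite hH_0. simpl. nra.
  - set (K := S k).
    assert (0 <= x ^ K <= y ^ K) by (split; [apply pow_le; lra|apply pow_incr; lra]).
    assert (y ^ K <= (31/100) ^ K) as HyK by (apply pow_incr; lra).
    assert ((31/100) ^ K <= 31/100) by (unfold K; simpl; pose proof (pow_le_1' (31/100) k ltac:(lra)); pose proof (pow_le (31/100) k ltac:(lra)); nra).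
    pose proof (q_diff2 (x ^ K) (y ^ K) ltac:(lra) ltac:(lra)) as Hq.
    pose proof (pow_diff x y k ltac:(lra)) as Hd. fold K in Hd.
    pose proof (nat_le_pow K) as HK.
    pose proof (hH_bound K ltac:(unfold K; lia)) as Hb. pose proof (hH_nonneg K).
    assert (0 <= (20/3) ^ K) by (apply pow_le; lra). assert (0 <= (3/2) ^ K) by (apply pow_le; lra).
    assert (0 <= (31/100) ^ K) by (apply pow_le; lra). assert (0 <= INR K) by apply pos_INR.
    set (A := (20/3) ^ K) in *. set (B := (31/100) ^ K) in *. set (C := (3/2) ^ K) in *. set (E := (31/100) ^ k) in *.
    set (yk := y ^ K) in *. set (xk := x ^ K) in *. set (yk' := y ^ k) in *.
    assert (0 <= yk' <= E) by (split; [apply pow_le; lra|apply pow_incr; lra]).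
    assert (Hbe : 31/100 * E = B) by reflexivity.
    assert (HABC : A * C * B * B <= (39/40) ^ K).
    { unfold A, B, C. rewrite <- !Rpow_mult_distr. apply pow_incr. lra. }
    assert (0 <= y - x) by lra.
    (* q(yk) - q(xk) <= 2 yk (yk - xk) <= 2 yk INR K yk' (y - x) *)
    assert (q yk - q xk <= 2 * B * (C * E * (y - x))).
    { apply Rle_trans with (2 * yk * (yk - xk)); auto.
      apply Rmult_le_compat; try nra. apply Rle_trans with (INR K * yk' * (y - x)); auto.
      apply Rmult_le_compat_r; [lra|]. apply Rmult_le_compat; lra. }
    assert (hH K * q yk - hH K * q xk <= (1/4) * A * (2 * B * (C * E * (y - x)))).
    { replace (hH K * q yk - hH K * q xk) with (hH K * (q yk - q xk)) by ring.
      apply Rle_trans with (hH K * (2 * B * (C * E * (y - x)))); [apply Rmult_le_compat_l; lra|].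
      rewrite Rmult_assoc. apply Rmult_le_compat_r; [|lra].
      assert (0 <= E) by lra. assert (0 <= C * E) by nra. assert (0 <= C * E * (y - x)) by nra. nra. }
    assert ((1/4) * A * (2 * B * (C * E * (y - x))) <= (y - x) * (1 / (2 * (31/100)) * (39/40) ^ K)); [|lra].
    replace ((1/4) * A * (2 * B * (C * E * (y - x)))) with ((y - x) * (1 / (2 * (31/100))) * (A * C * B * (31/100 * E))) by (field; lra).
    rewrite Hbe. apply Rle_trans with ((y - x) * (1 / (2 * (31/100))) * (39/40) ^ K); [apply Rmult_le_compat_l; [nra|auto]|right; ring].
Qed.

Definition Qf (x : R) : R := Series (tt x).

Lemma ex_Qf x : 0 <= x <= Y -> ex_series (tt x).
Proof. intros Hx. apply (ex_series_nonneg_le _ (fun k => (13/20) ^ k)).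
  - intros k. pose proof (tt_bound x k Hx). pose proof (pow_le (13/20) k ltac:(lra)). lra.
  - apply ex_series_geom. rewrite Rabs_right; lra. Qed.

Lemma tt_nonneg x k : 0 <= x <= Y -> 0 <= tt x k.
Proof. intros; apply tt_bound; auto. Qed.

Lemma Qf_part x N : 0 <= x <= Y -> sumR (tt x) (seq 0 (S N)) <= Qf x.
Proof. intros Hx. rewrite sumR_sum_n. apply ser_part_le; [intros; apply tt_nonneg; auto|apply ex_Qf; auto]. Qed.

Lemma Qf_nonneg x : 0 <= x <= Y -> 0 <= Qf x.
Proof. intros Hx. pose proof (Qf_part x 0 Hx). simpl seq in H. rewrite sumR_cons, sumR_nil in H. pose proof (tt_nonneg x 0 Hx). lra. Qed.

Definition Dl := 40 / (2 * Y).

Lemma Qf_lip x y : 0 <= x <= y -> y <= Y -> Qf y <= Qf x + Dl * (y - x).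
Proof. intros Hxy HyY. unfold Qf at 1. apply ser_le_const; [apply ex_Qf; unfold Y in *; lra|].
  intros N. rewrite <- sumR_sum_n.
  apply Rle_trans with (sumR (tt x) (seq 0 (S N)) + (y - x) * ((1 / (2 * Y)) * sumR (fun k => (39/40) ^ k) (seq 0 (S N)))).
  - rewrite <- sumR_scal, <- sumR_scal, <- sumR_plus. apply sumR_le. intros k _.
    pose proof (tt_lip x y k Hxy HyY). lra.
  - pose proof (Qf_part x N ltac:(unfold Y in *; lra)). pose proof (geom_le (39/40) N ltac:(lra)).
    unfold Dl, Y in *. assert (0 <= y - x) by lra. assert (0 < 1 / (2 * (31/100))) by lra.
    assert (E40 : 1 / (1 - 39/40) = 40) by lra. rewrite E40 in H0.
    assert ((y - x) * (1 / (2 * (31 / 100)) * sumR (fun k : nat => (39 / 40) ^ k) (seq 0 (S N))) <= (y - x) * (1 / (2 * (31 / 100)) * 40)) by (apply Rmult_le_compat_l; auto; apply Rmult_le_compat_l; lra).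
    replace (40 / (2 * (31 / 100)) * (y - x)) with ((y - x) * (1 / (2 * (31 / 100)) * 40)) by field. lra.
Qed.

Lemma Qf_zero : Qf 0 <= 0.
Proof. apply ser_le_const; [apply ex_Qf; unfold Y; lra|]. intros N. rewrite <- sumR_sum_n.
  rewrite sumR_zero; [lra|]. intros k _. unfold tt. destruct k; [rewrite hH_0; lra|].
  rewrite pow_i by lia. rewrite q0; lra. Qed.

Definition g (x : R) : R := x + 1 - 2 * ln 2 + 2 * Qf x.

Lemma g0 : g 0 < 0.
Proof. unfold g. pose proof Qf_zero. pose proof ln2_gt. lra. Qed.

Lemma g03 : 0 < g (3/10).
Proof. unfold g. pose proof (Qf_part (3/10) 1 ltac:(unfold Y; lra)).
  simpl seq in H. rewrite !sumR_cons, sumR_nil in H. unfold tt in H. rewrite hH_0 in H.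
  pose proof (aQ_1_ge QT I) as H1. fold (hH 1) in H1.
  assert (0 <= q (3/10)) by (apply q_nonneg; lra). simpl pow in H.
  replace (3/10 * 1) with (3/10) in H by lra.
  assert (q (3/10) <= hH 1 * q (3/10)) by nra.
  unfold q in *. replace (1 - 3/10) with (7/10) in * by lra.
  pose proof ln14_lt as L14. replace (14/10) with (2 * (7/10)) in L14 by lra. rewrite ln_mult in L14 by lra. lra.
Qed.

Lemma sumR_seq0 (f : nat -> R) K : sumR f (seq 0 (S K)) = f 0%nat + sumR f (seq 1 K).
Proof. reflexivity. Qed.

Lemma exp_tangent z : 2 * (1 + z - ln 2) <= exp z.
Proof. replace z with (ln 2 + (z - ln 2)) at 2 by lra. rewrite exp_plus, exp_ln by lra.
  pose proof (exp_ineq1_le (z - ln 2)). lra. Qed.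

Lemma bernoulli e r : 0 <= e <= 1 -> 1 - INR r * e <= (1 - e) ^ r.
Proof. intros He. induction r; [simpl; lra|]. rewrite S_INR. change ((1 - e) ^ S r) with ((1 - e) * (1 - e) ^ r).
  assert (0 <= (1 - e) ^ r) by (apply pow_le; lra). assert (0 <= INR r) by apply pos_INR. nra. Qed.

Lemma prodR_const_mul {A} (f : A -> R) c l : prodR (fun a => c * f a) l = c ^ length l * prodR f l.
Proof. induction l; [rewrite !prodR_nil; simpl; lra|]. rewrite !prodR_cons, IHl. simpl. ring. Qed.

Lemma limit_J (P C x : R) (r : nat) : 0 <= x < 1 -> 0 <= P -> 0 <= C ->
  (forall J, (1 - INR r * x ^ (S J)) * P <= C) -> P <= C.
Proof. intros Hx HP HC H. destruct (Rle_or_lt P C) as [|HPC]; auto. exfalso.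
  set (eps := (P - C) / (P * (INR r + 1))).
  assert (0 < INR r + 1) by (pose proof (pos_INR r); lra).
  assert (0 < eps) by (unfold eps; apply Rdiv_lt_0_compat; [lra|]; apply Rmult_lt_0_compat; lra).
  destruct (pow_lt_1_zero x ltac:(rewrite Rabs_right; lra) eps H1) as [N HN].
  specialize (HN (S N) ltac:(lia)). rewrite Rabs_right in HN by (apply Rle_ge, pow_le; lra).
  specialize (H N).
  assert (INR r * x ^ S N * P <= INR r * eps * P).
  { apply Rmult_le_compat_r; auto. apply Rmult_le_compat_l; [apply pos_INR|lra]. }
  assert (INR r * eps * P < P - C).
  { unfold eps. replace (INR r * ((P - C) / (P * (INR r + 1))) * P) with ((P - C) * (INR r / (INR r + 1))) by (field; lra).
    assert (INR r / (INR r + 1) < 1) by (apply Rmult_lt_reg_r with (INR r + 1); [lra|]; unfold Rdiv; rewrite Rmult_assoc, Rinv_l; lra).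
    nra. }
  nra.
Qed.

Theorem H_div x : 0 < x <= Y -> 0 < g x -> ~ ex_series (fun n => Rabs (hH n * x ^ n)).
Proof.
  intros Hx Hg Hex. unfold Y in Hx.
  assert (Hex' : ex_series (fun n => hH n * x ^ n)).
  { apply (ex_series_ext (fun n => Rabs (hH n * x ^ n))); auto. intros n. apply Rabs_right.
    apply Rle_ge, Rmult_le_pos; [apply hH_nonneg|apply pow_le; lra]. }
  set (Hs := Series (fun n => hH n * x ^ n)).
  assert (Hpart : forall K, sumR (fun k => hH k * x ^ k) (seq 1 K) <= Hs).
  { intros K. pose proof (ser_part_le (fun n => hH n * x ^ n) K) as Hp. rewrite <- sumR_sum_n, sumR_seq0, hH_0 in Hp.
    assert (0 * x ^ 0 = 0) by lra. rewrite H in Hp. apply Rle_trans with (0 + sumR (fun k => hH k * x ^ k) (seq 1 K)); [lra|].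
    apply Hp; auto. intros; apply Rmult_le_pos; [apply hH_nonneg|apply pow_le; lra]. }
  pose proof (aQ_1_ge QT I) as H1. fold (hH 1) in H1.
  set (C := 1 + 2 * Hs - x).
  assert (HC0 : 0 < C).
  { pose proof (Hpart 1%nat). change (seq 1 1) with (1%nat :: nil) in H. rewrite sumR_cons, sumR_nil in H. unfold C. simpl pow in H. nra. }
  assert (HLB : forall K J, prodR (fun c => sumR (fun j => (x ^ leaves c) ^ j) (seq 0 (S J))) (Lrep QT (seq 1 K)) <= C).
  { intros K J. destruct (LB K J x ltac:(lra)) as [M HM]. eapply Rle_trans; [exact HM|]. unfold C.
    pose proof (Hpart M). pose proof (Hpart (S M)). change (seq 1 (S M)) with (1%nat :: seq 2 M) in H0.
    rewrite sumR_cons in H0. unfold hH in *. simpl pow in H0. nra. }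
  assert (HP : forall K, prodR (fun c => 1 / (1 - x ^ leaves c)) (Lrep QT (seq 1 K)) <= C).
  { intros K. set (L := Lrep QT (seq 1 K)).
    assert (Hu : forall c, In c L -> 0 <= x ^ leaves c <= x).
    { intros c _. pose proof (leaves_pos c). split; [apply pow_le; lra|].
      destruct (leaves c) as [|k]; [lia|]. simpl. pose proof (pow_le x k ltac:(lra)). pose proof (pow_le_1' x k ltac:(lra)). nra. }
    apply (limit_J _ C x (length L)); [lra|apply prodR_nonneg; intros c Hc; destruct (Hu c Hc); apply Rlt_le, Rdiv_lt_0_compat; lra|lra|].
    intros J. eapply Rle_trans; [|exact (HLB K J)].
    apply Rle_trans with ((1 - x ^ S J) ^ length L * prodR (fun c => 1 / (1 - x ^ leaves c)) L).
    - apply Rmult_le_compat_r; [apply prodR_nonneg; intros c Hc; destruct (Hu c Hc); apply Rlt_le, Rdiv_lt_0_compat; lra|].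
      apply bernoulli. split; [apply pow_le; lra|]. apply pow_le_1'; lra.
    - rewrite <- prodR_const_mul. apply prodR_le. intros c Hc. destruct (Hu c Hc).
      assert (x ^ leaves c < 1) by lra.
      rewrite geom_sum by lra. split.
      + apply Rmult_le_pos; [|apply Rlt_le, Rdiv_lt_0_compat; lra]. pose proof (pow_le_1' x (S J) ltac:(lra)); lra.
      + assert ((x ^ leaves c) ^ S J <= x ^ S J) by (apply pow_incr; lra). unfold Rdiv. rewrite Rmult_1_l.
        apply Rmult_le_compat_r; [apply Rlt_le, Rinv_0_lt_compat; lra|]. lra. }
  assert (HK : forall K, sumR (fun k => hH k * x ^ k) (seq 1 K) + sumR (tt x) (seq 1 K) <= ln C).
  { intros K. pose proof (HP K) as HPK. rewrite prodR_inv_exp in HPK.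
    2:{ intros c _. pose proof (leaves_pos c). apply pow_lt1; auto; lra. }
    rewrite (sumR_Lrep QT (seq 1 K) (fun k => - ln (1 - x ^ k))) in HPK.
    rewrite <- sumR_plus. rewrite <- (ln_exp (sumR _ _)). 
    assert (0 < C) by (pose proof (exp_pos (sumR (fun k => aQ QT k * - ln (1 - x ^ k)) (seq 1 K))); lra).
    apply ln_le; [apply exp_pos|]. eapply Rle_trans; [|exact HPK]. right. f_equal. apply sumR_ext. intros k _.
    unfold tt, q, hH. ring. }
  assert (Hsum : Hs + Qf x <= ln C).
  { unfold Hs, Qf. rewrite <- Series_plus by (auto; apply ex_Qf; unfold Y; lra).
    apply ser_le_const; [apply (ex_series_plus (fun n => hH n * x ^ n) (tt x)); auto; apply ex_Qf; unfold Y; lra|].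
    intros N. rewrite <- sumR_sum_n, sumR_seq0, sumR_plus. unfold tt. rewrite hH_0. pose proof (HK N) as HKN. unfold tt in HKN. lra. }
  assert (exp (Hs + Qf x) <= C) as HE.
  { rewrite <- (exp_ln C) by lra. destruct (Rle_or_lt (Hs + Qf x) (ln C)) as [Hl|Hl].
    - destruct Hl as [Hl|Hl]; [apply Rlt_le, exp_increasing; auto|rewrite Hl; lra].
    - lra. }
  pose proof (exp_tangent (Hs + Qf x)). unfold g, C in *. lra.
Qed.

Section ASide.
Variable T : tree.
Variable m : nat.
Hypothesis Hm : (2 <= m)%nat.
Hypothesis HT : hierarchy T.
Hypothesis HTm : leaves T = m.

Definition QA (t : tree) : Prop := ~ contains t T.
Definition hA k := aQ QA k.

Lemma QA_sub : forall l a, QA (Node l) -> In a l -> QA a.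
Proof. intros l a H Ha Hc. apply H. apply contains_node. right; eauto. Qed.

Lemma small_QA a : (leaves a < m)%nat -> QA a.
Proof. intros Hl [u [Hu Hi]]. apply subtrees_leaves in Hu. apply leaves_iso in Hi. lia. Qed.

Lemma mu_star N1 : (1 <= N1)%nat -> let L := Lrep QA (seq 1 N1) in
  exists mu, length mu = length L /\ (2 <= list_sum mu)%nat /\ wt (map leaves L) mu = m /\
    forall t, In t (Lrep QA (seq 2 N1)) -> vec L (kids t) <> mu.
Proof.
  intros HN L. assert (HpL : pwni L) by (apply pwni_Lrep, seq_NoDup).
  assert (exists lT, T = Node lT) as [lT ET] by (destruct T; eauto).
  pose proof HT as HT'. pose proof HTm as HTm'. rewrite ET in HT', HTm'.
  assert (Hlen : (2 <= length lT)%nat).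
  { apply hier_node in HT' as [Hl _]. destruct lT as [|a [|b l]]; simpl in *; try lia. }
  destruct (le_lt_dec m (S N1)) as [Hc|Hc].
  - (* use the children of T *)
    assert (Hcov : forall a, In a lT -> exists c, In c L /\ iso a c).
    { intros a Ha. apply (Lrep_cover QA (seq 1 N1) a (leaves a)).
      - pose proof (leaves_child_lt a lT Ha Hlen). pose proof (leaves_pos a). apply in_seq. lia.
      - apply hier_node in HT' as [_ Hall]. rewrite Forall_forall in Hall. split; auto. split; auto.
        apply small_QA. rewrite <- HTm'. apply leaves_child_lt; auto. }
    exists (vec L lT). split; [unfold vec; rewrite length_map; auto|]. split; [rewrite csum_vec; auto|]. split.
    + rewrite wt_vec; auto. rewrite <- HTm', leaves_node. destruct lT; simpl in *; [lia|auto].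
    + intros t Ht Hv. apply Lrep_in in Ht as [k [Hk Pt]]. apply in_seq in Hk.
      destruct Pt as [Hh [Hl HQ]]. apply HQ. destruct t as [l].
      assert (iso (Node l) (Node lT)) as Hi.
      { apply (match_iso L); auto.
        intros a Ha. apply (Lrep_cover QA (seq 1 N1) a (leaves a)).
        - apply hier_node in Hh as [Hlen' _]. pose proof (leaves_pos a).
          destruct l as [|b [|b' l']]; [contradiction|simpl in Hlen'; lia|].
          pose proof (leaves_child_lt a _ Ha ltac:(simpl; lia)). apply in_seq; lia.
        - apply hier_node in Hh as [_ Hall]. rewrite Forall_forall in Hall. split; auto. split; auto.
          eapply QA_sub; eauto. }
      apply contains_node. left. rewrite ET. exact Hi.
  - (* use m leaves *)
    assert (Hleaf : exists c, In c L /\ iso (Node []) c).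
    { apply (Lrep_cover QA (seq 1 N1) (Node []) 1). apply in_seq; lia.
      split; [apply hier_node; simpl; split; [lia|constructor]|split; auto]. apply small_QA. simpl. lia. }
    assert (Hcov : forall a, In a (repeat (Node []) m) -> exists c, In c L /\ iso a c).
    { intros a Ha. apply repeat_spec in Ha. subst. auto. }
    exists (vec L (repeat (Node []) m)). split; [unfold vec; rewrite length_map; auto|].
    split; [rewrite csum_vec, repeat_length; auto|]. split.
    + rewrite wt_vec; auto. clear. induction m; simpl; auto.
    + intros t Ht Hv. apply Lrep_in in Ht as [k [Hk Pt]]. apply in_seq in Hk.
      destruct Pt as [Hh [Hl HQ]]. destruct t as [l]. simpl in Hv.
      assert (wt (map leaves L) (vec L l) = wt (map leaves L) (vec L (repeat (Node []) m))) as E by (rewrite Hv; auto).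
      rewrite !wt_vec in E; auto.
      * assert (list_sum (map leaves (repeat (Node []) m)) = m) as E2 by (clear; induction m; simpl; auto).
        rewrite E2 in E. rewrite leaves_node in Hl. destruct l; [simpl in *; lia|]. lia.
      * intros a Ha. apply (Lrep_cover QA (seq 1 N1) a (leaves a)).
        -- apply hier_node in Hh as [Hlen' _]. pose proof (leaves_pos a).
           destruct l as [|b [|b' l']]; [contradiction|simpl in Hlen'; lia|].
           pose proof (leaves_child_lt a _ Ha ltac:(simpl; lia)). apply in_seq; lia.
        -- apply hier_node in Hh as [_ Hall]. rewrite Forall_forall in Hall. split; auto. split; auto.
           eapply QA_sub; eauto.
Qed.

Lemma hA_le k : hA k <= hH k.
Proof. apply aQ_mono. unfold QT; auto. Qed.

Lemma hA_nonneg k : 0 <= hA k. Proof. apply aQ_nonneg. Qed.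

Lemma A_bound x : 0 <= x <= Y -> g x - x ^ m <= 0 ->
  forall N, sumR (fun k => hA k * x ^ k) (seq 1 N) <= ln 2 - Qf x.
Proof.
  intros Hx Hg. unfold g, Y in *. set (ys := ln 2 - Qf x).
  assert (Hxm : 0 <= x ^ m <= x).
  { split; [apply pow_le; lra|]. destruct m as [|m']; [lia|]. simpl. pose proof (pow_le_1' x m' ltac:(lra)).
    pose proof (pow_le x m' ltac:(lra)). nra. }
  assert (Hys : 1 + x - x ^ m <= 2 * ys) by (unfold ys; lra).
  pose proof (Qf_nonneg x ltac:(unfold Y; lra)) as HQ0.
  induction N as [|N IH]; [simpl; rewrite sumR_nil; lra|].
  destruct N as [|N1].
  - change (seq 1 1) with (1%nat :: nil). rewrite sumR_cons, sumR_nil. pose proof (aQ_1_le QA). unfold hA. simpl pow. nra.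
  - set (N := S N1) in *. change (seq 1 (S N)) with (1%nat :: seq 2 N). rewrite sumR_cons.
    set (y := sumR (fun k => hA k * x ^ k) (seq 1 N)) in *.
    assert (Hy0 : 0 <= y) by (apply sumR_nonneg; intros; apply Rmult_le_pos; [apply hA_nonneg|apply pow_le; lra]).
    assert (Eys : ys = ln 2 - Qf x) by reflexivity. clearbody ys.
    assert (Ey : y = sumR (fun k => hA k * x ^ k) (seq 1 N)) by reflexivity. clearbody y.
    destruct (mu_star N ltac:(unfold N; lia)) as [mu [Hl [Hs [Hw Hn]]]].
    pose proof (UB QA QA_sub N x (mu :: nil) ltac:(unfold N; lia) ltac:(lra)) as HU. cbv zeta in HU.
    specialize (HU ltac:(constructor; [intros []|constructor])).
    specialize (HU ltac:(intros nu [<-|[]]; auto)).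
    specialize (HU ltac:(intros nu t [<-|[]] Ht; apply Hn; auto)).
    rewrite sumR_cons, sumR_nil, Hw in HU. fold (hA 1) in *.
    rewrite prodR_inv_exp in HU by (intros c _; apply pow_lt1; [lra|apply leaves_pos]).
    rewrite (sumR_Lrep QA (seq 1 N) (fun k => - ln (1 - x ^ k))) in HU.
    change (sumR (fun k => aQ QA k * x ^ k) (seq 1 N)) with (sumR (fun k => hA k * x ^ k) (seq 1 N)) in HU.
    change (sumR (fun k => aQ QA k * x ^ k) (seq 2 N)) with (sumR (fun k => hA k * x ^ k) (seq 2 N)) in HU.
    rewrite <- Ey in HU.
    assert (Hqs : sumR (fun k => aQ QA k * - ln (1 - x ^ k)) (seq 1 N) <= y + Qf x).
    { apply Rle_trans with (y + sumR (tt x) (seq 1 N)).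
      - rewrite Ey. rewrite <- sumR_plus. apply sumR_le. intros k Hk. apply in_seq in Hk. unfold tt, q.
        pose proof (hA_le k). pose proof (q_nonneg (x ^ k)) as Hq. unfold q in Hq.
        assert (0 <= x ^ k < 1) by (apply pow_lt1; [lra|lia]). specialize (Hq H0).
        unfold hA. fold (hA k). nra.
      - pose proof (Qf_part x N ltac:(unfold Y; lra)). rewrite sumR_seq0 in H. unfold tt at 1 in H.
        rewrite hH_0 in H. lra. }
    assert (HE : exp (sumR (fun k => aQ QA k * - ln (1 - x ^ k)) (seq 1 N)) <= exp (y + Qf x)).
    { destruct Hqs as [Hqs|Hqs]; [apply Rlt_le, exp_increasing; auto|rewrite Hqs; lra]. }
    assert (Hmono : exp (y + Qf x) - y <= exp (ys + Qf x) - ys).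
    { pose proof (exp_ineq1_le (ys - y)) as E1. replace (ys + Qf x) with ((y + Qf x) + (ys - y)) by ring.
      rewrite (exp_plus (y + Qf x) (ys - y)). pose proof (exp_ineq1_le (y + Qf x)) as E2.
      assert (0 <= ys - y) as E3 by lra.
      assert (exp (y + Qf x) * (exp (ys - y) - 1 - (ys - y)) >= 0) as E4 by (apply Rle_ge, Rmult_le_pos; lra).
      assert ((exp (y + Qf x) - 1) * (ys - y) >= 0) as E5 . { apply Rle_ge, Rmult_le_pos; [|exact E3]. pose proof (Rplus_le_compat _ _ _ _ Hy0 HQ0). lra. } nra. }
    assert (exp (ys + Qf x) = 2) by (rewrite Eys; replace (ln 2 - Qf x + Qf x) with (ln 2) by ring; apply exp_ln; lra).
    pose proof (aQ_1_le QA). fold (hA 1) in H0. simpl pow. 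
    assert (hA 1 * (x * 1) <= x) by nra. lra.
Qed.
End ASide.

Lemma CV_le_of_div (a : nat -> R) x : 0 <= x -> ~ ex_series (fun n => Rabs (a n * x ^ n)) -> Rbar_le (CV_radius a) x.
Proof. intros Hx H. apply Rbar_not_lt_le. intros Hlt. apply H. apply CV_disk_inside. rewrite Rabs_right; auto; lra. Qed.

Lemma CV_ge_of_bnd (a : nat -> R) x M : (forall n, Rabs (a n * x ^ n) <= M) -> Rbar_le x (CV_radius a).
Proof. intros H. destruct (CV_radius_bounded a) as [Hub _]. apply Hub. exists M; auto. Qed.

Lemma discrete_ivt (f : R -> R) d : forall n, f 0 <= 0 -> 0 < f (INR n * d) ->
  exists i, (i < n)%nat /\ f (INR i * d) <= 0 /\ 0 < f (INR (S i) * d).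
Proof. induction n; intros H0 Hn.
  - simpl in Hn. replace (0 * d) with 0 in Hn by ring. lra.
  - destruct (Rle_or_lt (f (INR n * d)) 0) as [Hle|Hlt].
    + exists n; split; auto.
    + destruct (IHn H0 Hlt) as [i [Hi ?]]. exists i; split; auto.
Qed.


Theorem theorem3p3 (m : nat) (T : tree) :
  (2 <= m)%nat -> hierarchy T -> leaves T = m ->
  Rbar_lt (CV_radius (hier_gf (fun _ => True)))
          (CV_radius (hier_gf (fun t => ~ contains t T))).
Proof.
  intros Hm HT HTm.
  rewrite (CV_radius_ext (hier_gf (fun _ => True)) hH) by (intros; apply hier_gf_aQ).
  rewrite (CV_radius_ext (hier_gf (fun t => ~ contains t T)) (hA T)) by (intros; apply hier_gf_aQ).
  assert (HDl : 0 < Dl) by (unfold Dl, Y; lra).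
  set (D1 := 1 + 2 * Dl). assert (HD1 : 0 < D1) by (unfold D1; lra).
  assert (Hlip : forall x y, 0 <= x <= y -> y <= Y -> g y <= g x + D1 * (y - x)).
  { intros x y Hxy HyY. pose proof (Qf_lip x y Hxy HyY). unfold g, D1. lra. }
  pose proof ln2_gt as Hln2.
  set (b := (2 * ln 2 - 1) / D1). assert (Hb : 0 < b) by (unfold b; apply Rdiv_lt_0_compat; lra).
  assert (Hbm : 0 < b ^ m) by (apply pow_lt; auto).
  set (eps := Rmin (1/30) (b ^ m / (2 * D1 * (3/10)))).
  assert (Heps : 0 < eps) by (unfold eps; apply Rmin_pos; [lra|apply Rdiv_lt_0_compat; lra]).
  destruct (archimed_cor1 eps Heps) as [M [HM HM0]].
  assert (HMpos : 0 < INR M) by (apply lt_0_INR; lia).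
  set (d := (3/10) / INR M).
  assert (Hd0 : 0 < d) by (unfold d; apply Rdiv_lt_0_compat; lra).
  assert (Hdeps : d < 3/10 * eps) by (unfold d, Rdiv; nra).
  assert (He1 : eps <= 1/30) by apply Rmin_l.
  assert (He2 : eps <= b ^ m / (2 * D1 * (3/10))) by apply Rmin_r.
  assert (HMd : INR M * d = 3/10) by (unfold d; field; lra).
  destruct (discrete_ivt g d M ltac:(pose proof g0; lra) ltac:(rewrite HMd; apply g03)) as [i [Hi [Hgi Hgi1]]].
  assert (Hii : INR (S i) <= INR M) by (apply le_INR; lia).
  rewrite S_INR in Hgi1, Hii.
  pose proof (pos_INR i) as Hi0.
  set (x0 := (INR i + 1) * d) in *. set (x1 := x0 + d).
  assert (Hx0 : x0 <= 3/10) by (unfold x0; rewrite <- HMd; apply Rmult_le_compat_r; lra).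
  assert (Hx0p : 0 < x0) by (unfold x0; nra).
  assert (Hx1 : x1 <= Y) by (unfold x1, Y; lra).
  assert (Hgx1 : g x1 <= D1 * (2 * d)).
  { pose proof (Hlip (INR i * d) x1 ltac:(unfold x1, x0; split; nra) Hx1).
    replace (x1 - INR i * d) with (2 * d) in H by (unfold x1, x0; ring). lra. }
  assert (Hx0b : b < x0).
  { pose proof (Hlip 0 x0 ltac:(lra) ltac:(unfold Y; lra)). unfold g in H at 2.
    pose proof Qf_zero. unfold b. apply Rmult_lt_reg_r with D1; auto. unfold Rdiv. rewrite Rmult_assoc, Rinv_l by lra. nra. }
  assert (Hpow : b ^ m <= x1 ^ m) by (apply pow_incr; unfold x1; lra).
  assert (Hdb : D1 * (2 * d) <= b ^ m).
  { assert (2 * D1 * (3/10) * eps <= b ^ m).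
    { apply Rmult_le_reg_r with (/ (2 * D1 * (3/10))). apply Rinv_0_lt_compat; nra.
      replace (2 * D1 * (3/10) * eps * / (2 * D1 * (3/10))) with eps by (field; lra). exact He2. }
    nra. }
  assert (HgA : g x1 - x1 ^ m <= 0) by lra.
  apply (Rbar_le_lt_trans _ (Finite x0)).
  - apply CV_le_of_div; [lra|]. apply H_div; [unfold Y in *; split; lra|lra].
  - apply (Rbar_lt_le_trans _ (Finite x1)); [simpl; unfold x1; lra|].
    apply (CV_ge_of_bnd _ x1 (ln 2 - Qf x1)). intros n.
    pose proof (A_bound T m Hm HT HTm x1 ltac:(unfold x1, Y in *; split; lra) HgA) as HA.
    pose proof (HA 0%nat) as HA0. simpl in HA0. rewrite sumR_nil in HA0.
    rewrite Rabs_right by (apply Rle_ge, Rmult_le_pos; [apply hA_nonneg|apply pow_le; unfold x1; lra]).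
    destruct n as [|n]; [unfold hA; rewrite aQ_0; lra|].
    eapply Rle_trans; [|exact (HA (S n))]. apply (sumR_in_le (fun k => hA T k * x1 ^ k)).
    + intros; apply Rmult_le_pos; [apply hA_nonneg|apply pow_le; unfold x1; lra].
    + apply in_seq; lia.
Qed.
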